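(* Let $F_{ij}$ ($0\le i\le m$, $0\le j\le n$) be an $m\times n$ generalized T-net in $I^3$. Then, up to interchanging the indices $i$ and $j$, there exist $a_0,\dots,a_{m+1},b_0,\dots,b_{n+1}\in\mathbb{R}^3$ and $\sigma_0,\dots,\sigma_{m+1}>0$ such that, with $\Delta_{ij}:=a_{i+1}-a_i+b_j(\sigma_{i+1}-\sigma_i)$, we have $\det(e_3,b_{j+1}-b_j,\Delta_{ij})\ne0$ for all $0\le i\le m$, $0\le j\le n$ and $$F_{ij}=-\frac{1}{\det(e_3,b_{j+1}-b_j,\Delta_{ij})}\begin{pmatrix}\det(e_1,b_{j+1}-b_j,\Delta_{ij})\\ \det(e_2,b_{j+1}-b_j,\Delta_{ij})\\ \det(a_i+\sigma_ib_j,b_{j+1}-b_j,\Delta_{ij})\end{pmatrix}.$$ Moreover, for some $\varepsilon>0$ the family $$F_{ij}(t)=-\frac{1}{\det(e_3,b_{j+1}-b_j,\Delta_{ij})}\begin{pmatrix}\det(e_1,b_{j+1}-b_j,\Delta_{ij})\\ \det(e_2,b_{j+1}-b_j,\Delta_{ij})\\ \det(P_{ij}(t),b_{j+1}-b_j,\Delta_{ij})\end{pmatrix},\quad t\in[0,\varepsilon],$$ where $$P_{ij}(t)=a_0+\sum_{k=1}^{i}\frac{(a_k-a_{k-1})(\sigma_k+\sigma_{k-1})}{\sqrt{t+\sigma_k^2}+\sqrt{t+\sigma_{k-1}^2}}+\sqrt{t+\sigma_i^2}\,b_j,$$ is a nontrivial isotropic isometric deformation of $F_{ij}$.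
   Context: $I^3$ is $\mathbb{R}^3$ with coordinates $(x,y,z)$, $e_1=(1,0,0)^T,e_2=(0,1,0)^T,e_3=(0,0,1)^T$; a line or plane is isotropic if parallel to the $z$-axis; top view of $(x,y,z)$ is $(x,y)$. Isotropic congruences: maps $\mathbf{x}\mapsto A\mathbf{x}+\mathbf{b}$, $A=\begin{pmatrix}\cos\phi&-\sin\phi&0\\ \sin\phi&\cos\phi&0\\ c_1&c_2&1\end{pmatrix}$. Metric duality: point $P=(P^1,P^2,P^3)\leftrightarrow$ plane $P^*\colon z=P^1x+P^2y-P^3$. An $m\times n$ net: points $F_{ij}$, $0\le i\le m,0\le j\le n$, with $F_{ij},F_{i+1,j},F_{i+1,j+1},F_{i,j+1}$ consecutive vertices of a convex planar quadrilateral (face $p_{ij}$) for all $0\le i<m,0\le j<n$. Its parameter lines are the broken lines $F_{i0}\dots F_{in}$ ($0\le i\le m$) and $F_{0j}\dots F_{mj}$ ($0\le j\le n$). Boundary vertices: $i\in\{0,m\}$ or $j\in\{0,n\}$; consecutive faces around non-boundary $F_{ij}$: $p_{i-1,j-1},p_{i,j-1},p_{ij},p_{i-1,j}$. Convex 4-hedral angle with vertex $O$: union of rays from $O$ meeting a convex quadrilateral in a plane not through $O$; flat angles: rays through one side; admissible: isotropic line through $O$ meets its interior. Dual-convex: $m,n\ge2$ and at each non-boundary vertex the four consecutive face planes are the planes of four consecutive flat angles of an admissible convex 4-hedral angle. A generalized T-net is a dual-convex $m\times n$ net all of whose parameter lines are planar (each lies in a plane), the parameter lines of one family lying in isotropic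 planes. Curvature at non-boundary vertex with consecutive faces $p_1..p_4$: $\Omega=\frac12\sum_{k=1}^4\det(\overline{p_k^*},\overline{p_{k+1}^*})$, $p_5=p_1$. An isotropic isometric deformation of a dual-convex net $F_{ij}$ is a continuous family of $m\times n$ nets $F_{ij}(t)$ with $F_{ij}(0)=F_{ij}$, corresponding faces isotropically congruent, and equal curvatures at corresponding non-boundary vertices; it is nontrivial if not for every $t$ is there an isotropic congruence $C_t$ with $F_{ij}(t)=C_t(F_{ij})$ for all $i,j$. *)

(* Defs.v *)
From Stdlib Require Import Reals Lra.
Open Scope R_scope.

Definition vec3 : Type := (R * R * R)%type.
Definition mk3 (x y z : R) : vec3 := (x, y, z).
Definition vx (v : vec3) : R := fst (fst v).
Definition vy (v : vec3) : R := snd (fst v).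
Definition vz (v : vec3) : R := snd v.

Definition vadd (u v : vec3) : vec3 := mk3 (vx u + vx v) (vy u + vy v) (vz u + vz v).
Definition vsub (u v : vec3) : vec3 := mk3 (vx u - vx v) (vy u - vy v) (vz u - vz v).
Definition vscale (s : R) (v : vec3) : vec3 := mk3 (s * vx v) (s * vy v) (s * vz v).
Definition vzero : vec3 := mk3 0 0 0.
Definition dot (u v : vec3) : R := vx u * vx v + vy u * vy v + vz u * vz v.
Definition cross (u v : vec3) : vec3 :=
  mk3 (vy u * vz v - vz u * vy v) (vz u * vx v - vx u * vz v) (vx u * vy v - vy u * vx v).
Definition det3 (u v w : vec3) : R := dot u (cross v w).

Definition e1 : vec3 := mk3 1 0 0.
Definition e2 : vec3 := mk3 0 1 0.
Definition e3 : vec3 := mk3 0 0 1.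

Fixpoint vsum1 (f : nat -> vec3) (i : nat) : vec3 :=
  match i with
  | O => vzero
  | S i' => vadd (vsum1 f i') (f (S i'))
  end.

Definition det2 (a b : R * R) : R := fst a * snd b - snd a * fst b.

(** A, B, C, D are consecutive vertices of a (non-degenerate) convex planar
    quadrilateral: coplanar, and all turns at the vertices are in the same
    (nonzero) rotational direction. *)
Definition convex_quad (A B C D : vec3) : Prop :=
  det3 (vsub B A) (vsub C A) (vsub D A) = 0 /\
  let t1 := cross (vsub B A) (vsub C B) in
  let t2 := cross (vsub C B) (vsub D C) in
  let t3 := cross (vsub D C) (vsub A D) in
  let t4 := cross (vsub A D) (vsub B A) in
  0 < dot t1 t1 /\ 0 < dot t1 t2 /\ 0 < dot t1 t3 /\ 0 < dot t1 t4.

Definition net_of := nat -> nat -> vec3.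

(** face p_ij has vertices F i j, F (i+1) j, F (i+1) (j+1), F i (j+1) *)
Definition is_net (m n : nat) (F : net_of) : Prop :=
  forall i j, (i < m)%nat -> (j < n)%nat ->
    convex_quad (F i j) (F (S i) j) (F (S i) (S j)) (F i (S j)).

Definition in_face_plane (F : net_of) (i j : nat) (X : vec3) : Prop :=
  det3 (vsub (F (S i) j) (F i j)) (vsub (F i (S j)) (F i j)) (vsub X (F i j)) = 0.

(** Convex 4-hedral angle with vertex O spanned over the convex quadrilateral
    Q1 Q2 Q3 Q4 (whose plane does not pass through O); it is admissible if the
    isotropic line through O meets its interior, i.e. meets an open ray from O
    through an interior point of the quadrilateral. *)
Definition convex_4hedral (O Q1 Q2 Q3 Q4 : vec3) : Prop :=
  convex_quad Q1 Q2 Q3 Q4 /\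
  det3 (vsub Q2 Q1) (vsub Q4 Q1) (vsub O Q1) <> 0.

Definition admissible_4hedral (O Q1 Q2 Q3 Q4 : vec3) : Prop :=
  exists (s lam w1 w2 w3 w4 : R),
    0 < lam /\ 0 < w1 /\ 0 < w2 /\ 0 < w3 /\ 0 < w4 /\ w1 + w2 + w3 + w4 = 1 /\
    vscale s e3 =
      vscale lam (vsub (vadd (vadd (vscale w1 Q1) (vscale w2 Q2))
                             (vadd (vscale w3 Q3) (vscale w4 Q4))) O).

(** At the non-boundary vertex F i j the consecutive faces
    p_{i-1,j-1}, p_{i,j-1}, p_{ij}, p_{i-1,j} lie in the planes of the
    consecutive flat angles (O Q1 Q2), (O Q2 Q3), (O Q3 Q4), (O Q4 Q1). *)
Definition dual_convex_at (F : net_of) (i j : nat) : Prop :=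
  let O := F i j in
  exists Q1 Q2 Q3 Q4 : vec3,
    convex_4hedral O Q1 Q2 Q3 Q4 /\ admissible_4hedral O Q1 Q2 Q3 Q4 /\
    in_face_plane F (i - 1) (j - 1) Q1 /\ in_face_plane F (i - 1) (j - 1) Q2 /\
    in_face_plane F i (j - 1) Q2 /\ in_face_plane F i (j - 1) Q3 /\
    in_face_plane F i j Q3 /\ in_face_plane F i j Q4 /\
    in_face_plane F (i - 1) j Q4 /\ in_face_plane F (i - 1) j Q1.

Definition dual_convex (m n : nat) (F : net_of) : Prop :=
  is_net m n F /\ (2 <= m)%nat /\ (2 <= n)%nat /\
  forall i j, (1 <= i)%nat -> (i < m)%nat -> (1 <= j)%nat -> (j < n)%nat ->
    dual_convex_at F i j.

(** a set of points lies in a plane {X | N.X = d}, N <> 0; isotropic plane: N_3 = 0 *)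
Definition in_some_plane (P : vec3 -> Prop) : Prop :=
  exists (N : vec3) (d : R), N <> vzero /\ forall X, P X -> dot N X = d.
Definition in_some_isotropic_plane (P : vec3 -> Prop) : Prop :=
  exists (N : vec3) (d : R), N <> vzero /\ vz N = 0 /\ forall X, P X -> dot N X = d.

Definition line_i (n : nat) (F : net_of) (i : nat) : vec3 -> Prop :=
  fun X => exists j, (j <= n)%nat /\ X = F i j.
Definition line_j (m : nat) (F : net_of) (j : nat) : vec3 -> Prop :=
  fun X => exists i, (i <= m)%nat /\ X = F i j.

Definition generalized_T_net (m n : nat) (F : net_of) : Prop :=
  dual_convex m n F /\
  (forall i, (i <= m)%nat -> in_some_plane (line_i n F i)) /\
  (forall j, (j <= n)%nat -> in_some_plane (line_j m F j)) /\
  ((forall i, (i <= m)%nat -> in_some_isotropic_plane (line_i n F i)) \/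
   (forall j, (j <= n)%nat -> in_some_isotropic_plane (line_j m F j))).

Definition iso_cong (phi c1 c2 : R) (b : vec3) (X : vec3) : vec3 :=
  mk3 (cos phi * vx X - sin phi * vy X + vx b)
      (sin phi * vx X + cos phi * vy X + vy b)
      (c1 * vx X + c2 * vy X + vz X + vz b).

Definition faces_iso_congruent (F G : net_of) (i j : nat) : Prop :=
  exists (phi c1 c2 : R) (b : vec3),
    G i j = iso_cong phi c1 c2 b (F i j) /\
    G (S i) j = iso_cong phi c1 c2 b (F (S i) j) /\
    G (S i) (S j) = iso_cong phi c1 c2 b (F (S i) (S j)) /\
    G i (S j) = iso_cong phi c1 c2 b (F i (S j)).

(** top view of the metric dual point of the (non-isotropic) plane of face p_ij:
    the plane z = P1 x + P2 y - P3 gives (P1, P2). *)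
Definition dual_top (F : net_of) (i j : nat) : R * R :=
  let N := cross (vsub (F (S i) j) (F i j)) (vsub (F i (S j)) (F i j)) in
  (- vx N / vz N, - vy N / vz N).

Definition curvature (F : net_of) (i j : nat) : R :=
  let p1 := dual_top F (i - 1) (j - 1) in
  let p2 := dual_top F i (j - 1) in
  let p3 := dual_top F i j in
  let p4 := dual_top F (i - 1) j in
  / 2 * (det2 p1 p2 + det2 p2 p3 + det2 p3 p4 + det2 p4 p1).

Definition continuous_on_interval (f : R -> R) (a b : R) : Prop :=
  forall t, a <= t <= b -> forall e, 0 < e -> exists d, 0 < d /\
    forall s, a <= s <= b -> Rabs (s - t) < d -> Rabs (f s - f t) < e.

Definition iso_isometric_deformation (m n : nat) (F : net_of) (eps : R)
    (G : R -> net_of) : Prop :=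
  (forall i j, (i <= m)%nat -> (j <= n)%nat -> G 0 i j = F i j) /\
  (forall i j, (i <= m)%nat -> (j <= n)%nat ->
     continuous_on_interval (fun t => vx (G t i j)) 0 eps /\
     continuous_on_interval (fun t => vy (G t i j)) 0 eps /\
     continuous_on_interval (fun t => vz (G t i j)) 0 eps) /\
  (forall t, 0 <= t <= eps -> is_net m n (G t)) /\
  (forall t, 0 <= t <= eps -> forall i j, (i < m)%nat -> (j < n)%nat ->
     faces_iso_congruent F (G t) i j) /\
  (forall t, 0 <= t <= eps -> forall i j,
     (1 <= i)%nat -> (i < m)%nat -> (1 <= j)%nat -> (j < n)%nat ->
     curvature (G t) i j = curvature F i j).

Definition nontrivial_deformation (m n : nat) (F : net_of) (eps : R)
    (G : R -> net_of) : Prop :=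
  iso_isometric_deformation m n F eps G /\
  ~ (forall t, 0 <= t <= eps -> exists (phi c1 c2 : R) (b : vec3),
        forall i j, (i <= m)%nat -> (j <= n)%nat -> G t i j = iso_cong phi c1 c2 b (F i j)).

Definition Delta (a b : nat -> vec3) (sigma : nat -> R) (i j : nat) : vec3 :=
  vadd (vsub (a (S i)) (a i)) (vscale (sigma (S i) - sigma i) (b j)).

Definition T_point (a b : nat -> vec3) (sigma : nat -> R) (i j : nat) (X : vec3) : vec3 :=
  let db := vsub (b (S j)) (b j) in
  let D := Delta a b sigma i j in
  vscale (- / det3 e3 db D) (mk3 (det3 e1 db D) (det3 e2 db D) (det3 X db D)).

Definition P_t (a b : nat -> vec3) (sigma : nat -> R) (i j : nat) (t : R) : vec3 :=
  vadd (vadd (a 0%nat)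
         (vsum1 (fun k => vscale ((sigma k + sigma (k - 1)%nat) /
                                  (sqrt (t + sigma k ^ 2) + sqrt (t + sigma (k - 1)%nat ^ 2)))
                                 (vsub (a k) (a (k - 1)%nat))) i))
       (vscale (sqrt (t + sigma i ^ 2)) (b j)).

Definition T_family (a b : nat -> vec3) (sigma : nat -> R) : R -> net_of :=
  fun t i j => T_point a b sigma i j (P_t a b sigma i j t).

(** conclusion of the proposition for a fixed orientation of the indices *)
Definition T_representation (m n : nat) (F : net_of) : Prop :=
  exists (a b : nat -> vec3) (sigma : nat -> R),
    (forall k, (k <= S m)%nat -> 0 < sigma k) /\
    (forall i j, (i <= m)%nat -> (j <= n)%nat ->
       det3 e3 (vsub (b (S j)) (b j)) (Delta a b sigma i j) <> 0 /\
       F i j = T_point a b sigma i j (vadd (a i) (vscale (sigma i) (b j)))) /\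
    exists eps, 0 < eps /\ nontrivial_deformation m n F eps (T_family a b sigma).

Definition transpose_net (F : net_of) : net_of := fun i j => F j i.

(* Main.v *)
Require Import Defs.
From Stdlib Require Import Reals Lra Lia Psatz.
Import Defs.
Open Scope R_scope.


Ltac vunf := unfold det3 in *; unfold vadd, vsub, vscale, vzero, dot, cross, det3, e1, e2, e3, mk3, vx, vy, vz in *; simpl in *.

Lemma vec_eq (u v : vec3) : vx u = vx v -> vy u = vy v -> vz u = vz v -> u = v.
Proof. destruct u as [[x y] z], v as [[x' y'] z']; unfold vx, vy, vz; simpl; intros; subst; reflexivity. Qed.

Definition lin (F d : vec3) : R := vx F * vx d + vy F * vy d - vz d.
Definition Lp (F X : vec3) : R := lin F X - vz F.

Lemma lin_add F u v : lin F (vadd u v) = lin F u + lin F v.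
Proof. unfold lin; vunf; ring. Qed.
Lemma lin_sub F u v : lin F (vsub u v) = lin F u - lin F v.
Proof. unfold lin; vunf; ring. Qed.
Lemma lin_scale F s u : lin F (vscale s u) = s * lin F u.
Proof. unfold lin; vunf; ring. Qed.

Definition Tp (db D X : vec3) : vec3 :=
  vscale (- / det3 e3 db D) (mk3 (det3 e1 db D) (det3 e2 db D) (det3 X db D)).

Lemma T_point_Tp a b sigma i j X :
  T_point a b sigma i j X = Tp (vsub (b (S j)) (b j)) (Delta a b sigma i j) X.
Proof. reflexivity. Qed.

Lemma Tp_x db D X X' : vx (Tp db D X) = vx (Tp db D X').
Proof. unfold Tp; vunf; ring. Qed.
Lemma Tp_y db D X X' : vy (Tp db D X) = vy (Tp db D X').
Proof. unfold Tp; vunf; ring. Qed.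

Lemma Tp_Lp db D X : det3 e3 db D <> 0 -> Lp (Tp db D X) X = 0.
Proof. intro H. unfold Lp, lin, Tp in *; vunf. field. intro; apply H; lra. Qed.

Lemma Tp_lin db D X d : det3 e3 db D <> 0 -> dot d (cross db D) = 0 -> lin (Tp db D X) d = 0.
Proof. intros H H2. unfold lin, Tp in *; vunf.
  apply (Rmult_eq_reg_l (fst (fst db) * snd (fst D) - snd (fst db) * fst (fst D))).
  2:{ intro; apply H; lra. }
  transitivity (- (fst (fst d) * (snd (fst db) * snd D - snd db * snd (fst D)) +
   snd (fst d) * (snd db * fst (fst D) - fst (fst db) * snd D) +
   snd d * (fst (fst db) * snd (fst D) - snd (fst db) * fst (fst D)))).
  field. intro; apply H; lra. rewrite H2. ring. Qed.

Lemma Tp_unique db D X F : det3 e3 db D <> 0 -> Lp F X = 0 -> lin F db = 0 -> lin F D = 0 ->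
  F = Tp db D X.
Proof. intros H H1 H2 H3. unfold Lp, lin, Tp in *; vunf.
  destruct F as [[x y] z]; simpl in *.
  assert (Hd : 0 * (snd (fst db) * snd D - snd db * snd (fst D)) +
      0 * (snd db * fst (fst D) - fst (fst db) * snd D) +
      1 * (fst (fst db) * snd (fst D) - snd (fst db) * fst (fst D)) =
      fst (fst db) * snd (fst D) - snd (fst db) * fst (fst D)) by ring.
  rewrite Hd in H |- *. clear Hd.
  set (k := fst (fst db) * snd (fst D) - snd (fst db) * fst (fst D)) in *.
  assert (ex : x = - / k * (1 * (snd (fst db) * snd D - snd db * snd (fst D)) +
    0 * (snd db * fst (fst D) - fst (fst db) * snd D) + 0 * k)).
  { apply (Rmult_eq_reg_l k); [|exact H]. field_simplify; [|exact H].
    unfold k. nra. }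
  assert (ey : y = - / k * (0 * (snd (fst db) * snd D - snd db * snd (fst D)) +
    1 * (snd db * fst (fst D) - fst (fst db) * snd D) + 0 * k)).
  { apply (Rmult_eq_reg_l k); [|exact H]. field_simplify; [|exact H].
    unfold k. nra. }
  f_equal; [f_equal|]; auto.
  apply (Rmult_eq_reg_l k); [|exact H]. field_simplify; [|exact H].
  rewrite ex, ey in H1. field_simplify in H1; [|exact H].
  unfold Rdiv in H1. apply Rmult_integral in H1. destruct H1 as [H1|H1].
  lra. exfalso; apply (Rinv_neq_0_compat k H); exact H1.
Qed.


Lemma cp_ext (f g : R -> R) t : (forall x, f x = g x) -> continuity_pt f t -> continuity_pt g t.
Proof. intros He H e He0. destruct (H e He0) as [d [Hd H']]. exists d; split; auto.
  intros x Hx. rewrite <- !He. apply H'. exact Hx. Qed.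
Lemma cp_plus (f g : R -> R) t : continuity_pt f t -> continuity_pt g t -> continuity_pt (fun x => f x + g x) t.
Proof. intros; exact (continuity_pt_plus f g t H H0). Qed.
Lemma cp_mult (f g : R -> R) t : continuity_pt f t -> continuity_pt g t -> continuity_pt (fun x => f x * g x) t.
Proof. intros; exact (continuity_pt_mult f g t H H0). Qed.
Lemma cp_const c t : continuity_pt (fun _ => c) t.
Proof. apply continuity_pt_const. intros x y; reflexivity. Qed.
Lemma cp_id t : continuity_pt (fun x => x) t.
Proof. apply derivable_continuous_pt. apply derivable_pt_id. Qed.
Lemma cp_div (f g : R -> R) t : continuity_pt f t -> continuity_pt g t -> g t <> 0 -> continuity_pt (fun x => f x / g x) t.
Proof. intros; exact (continuity_pt_div f g t H H0 H1). Qed.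
Lemma cp_sqrt (f : R -> R) t : continuity_pt f t -> 0 <= f t -> continuity_pt (fun x => sqrt (f x)) t.
Proof. intros H H0. exact (continuity_pt_comp f sqrt t H (continuity_pt_sqrt _ H0)). Qed.

Lemma cp_interval (f : R -> R) a b : (forall t, a <= t <= b -> continuity_pt f t) -> continuous_on_interval f a b.
Proof. intros H t Ht e He. destruct (H t Ht e He) as [d [Hd H']]. exists d; split; [lra|].
  intros s Hs Hst. destruct (Req_dec s t) as [->|Hne].
  - unfold Rminus; rewrite Rplus_opp_r, Rabs_R0; lra.
  - apply (H' s). split. split; [exact I| auto]. exact Hst. Qed.

Lemma cp_ext' (g f : R -> R) t : (forall x, g x = f x) -> continuity_pt f t -> continuity_pt g t.
Proof. intros He H. apply (cp_ext f g t); auto. Qed.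


Definition sq (sigma : nat -> R) (t : R) (k : nat) : R := sqrt (t + sigma k ^ 2).

Lemma sq_pos sigma t k : 0 <= t -> 0 < sigma k -> 0 < sq sigma t k.
Proof. intros. unfold sq. apply sqrt_lt_R0. nra. Qed.
Lemma sq_sq sigma t k : 0 <= t -> sq sigma t k * sq sigma t k = t + sigma k ^ 2.
Proof. intros. unfold sq. apply sqrt_sqrt. nra. Qed.
Lemma sq_0 sigma k : 0 < sigma k -> sq sigma 0 k = sigma k.
Proof. intros. unfold sq. rewrite Rplus_0_l. apply sqrt_pow2. lra. Qed.

Definition coefk (sigma : nat -> R) (t : R) (k : nat) : R :=
  (sigma (S k) + sigma k) / (sq sigma t (S k) + sq sigma t k).

Lemma P_t_unf a b sigma i j t :
  P_t a b sigma i j t = vadd (vadd (a 0%nat)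
         (vsum1 (fun k => vscale ((sigma k + sigma (k - 1)%nat) /
                                  (sq sigma t k + sq sigma t (k - 1)%nat))
                                 (vsub (a k) (a (k - 1)%nat))) i))
       (vscale (sq sigma t i) (b j)).
Proof. reflexivity. Qed.

Lemma K1 a b sigma i j t : 0 <= t -> 0 < sigma i -> 0 < sigma (S i) ->
  vsub (P_t a b sigma (S i) j t) (P_t a b sigma i j t) =
  vscale (coefk sigma t i) (Delta a b sigma i j).
Proof.
  intros Ht H1 H2. rewrite !P_t_unf. cbn [vsum1]. replace (S i - 1)%nat with i by lia.
  unfold coefk.
  pose proof (sq_pos sigma t i Ht H1). pose proof (sq_pos sigma t (S i) Ht H2).
  pose proof (sq_sq sigma t i Ht). pose proof (sq_sq sigma t (S i) Ht).
  set (s := sq sigma t i) in *. set (s' := sq sigma t (S i)) in *.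
  set (k := (sigma (S i) + sigma i) / (s' + s)).
  assert (Hk : s' = s + k * (sigma (S i) - sigma i)).
  { unfold k. apply (Rmult_eq_reg_r (s' + s)); [|lra].
    field_simplify; [|lra]. nra. }
  clearbody k. clearbody s'. subst s'. unfold Delta. vunf. apply vec_eq; vunf; ring.
Qed.

Lemma K2 a b sigma i j t :
  vsub (P_t a b sigma i (S j) t) (P_t a b sigma i j t) =
  vscale (sq sigma t i) (vsub (b (S j)) (b j)).
Proof. rewrite !P_t_unf. apply vec_eq; vunf; ring. Qed.

Lemma K3 a b sigma i j : (forall k, (k <= i)%nat -> 0 < sigma k) ->
  P_t a b sigma i j 0 = vadd (a i) (vscale (sigma i) (b j)).
Proof.
  intros Hs. rewrite P_t_unf. rewrite sq_0 by (apply Hs; lia).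
  assert (E : forall i', (i' <= i)%nat -> vsum1 (fun k => vscale ((sigma k + sigma (k - 1)%nat) /
                                  (sq sigma 0 k + sq sigma 0 (k - 1)%nat))
                                 (vsub (a k) (a (k - 1)%nat))) i' = vsub (a i') (a 0%nat)).
  { induction i' as [|i' IH]; intros Hi.
    - apply vec_eq; vunf; ring.
    - cbn [vsum1]. rewrite IH by lia. replace (S i' - 1)%nat with i' by lia.
      rewrite !sq_0 by (apply Hs; lia).
      pose proof (Hs i' ltac:(lia)). pose proof (Hs (S i') ltac:(lia)).
      replace ((sigma (S i') + sigma i') / (sigma (S i') + sigma i')) with 1 by (field; lra).
      apply vec_eq; vunf; ring. }
  rewrite E by lia. apply vec_eq; vunf; ring.
Qed.

Lemma Lp_shift F X Y : Lp F Y = Lp F X + lin F (vsub Y X).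
Proof. unfold Lp, lin; vunf; ring. Qed.

Definition nrm (P : vec3) : vec3 := mk3 (- vx P) (- vy P) 1.
Definition k2 (u v : vec3) : R := vx u * vy v - vy u * vx v.

Lemma edge_plane A B P : Lp A P = 0 -> Lp B P = 0 ->
  vz (vsub B A) = vx P * vx (vsub B A) + vy P * vy (vsub B A).
Proof. unfold Lp, lin; vunf; intros; lra. Qed.

Lemma cross_plane u v P : vz u = vx P * vx u + vy P * vy u -> vz v = vx P * vx v + vy P * vy v ->
  cross u v = vscale (k2 u v) (nrm P).
Proof. unfold k2, nrm; intros Hu Hv. apply vec_eq; vunf; rewrite ?Hu, ?Hv; ring. Qed.

Lemma dot_nrm k1 k3 P : dot (vscale k1 (nrm P)) (vscale k3 (nrm P)) = k1 * k3 * (vx P ^ 2 + vy P ^ 2 + 1).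
Proof. unfold nrm; vunf; ring. Qed.

Lemma pos_factor x q : 0 < q -> 0 < x * q -> 0 < x.
Proof. intros Hq H. destruct (Rlt_or_le 0 x) as [|Hx]; auto. nra. Qed.

Lemma convex_transfer A B C D A' B' C' D' P P' :
  convex_quad A B C D ->
  Lp A P = 0 -> Lp B P = 0 -> Lp C P = 0 -> Lp D P = 0 ->
  Lp A' P' = 0 -> Lp B' P' = 0 -> Lp C' P' = 0 -> Lp D' P' = 0 ->
  vx A' = vx A -> vy A' = vy A -> vx B' = vx B -> vy B' = vy B ->
  vx C' = vx C -> vy C' = vy C -> vx D' = vx D -> vy D' = vy D ->
  convex_quad A' B' C' D'.
Proof.
  intros Hc HA HB HC HD HA' HB' HC' HD' x1 y1 x2 y2 x3 y3 x4 y4.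
  unfold convex_quad in *; cbv zeta in *.
  destruct Hc as [_ [H1 [H2 [H3 H4]]]].
  pose proof (edge_plane _ _ _ HA HB) as eAB. pose proof (edge_plane _ _ _ HB HC) as eBC.
  pose proof (edge_plane _ _ _ HC HD) as eCD. pose proof (edge_plane _ _ _ HD HA) as eDA.
  pose proof (edge_plane _ _ _ HA' HB') as fAB. pose proof (edge_plane _ _ _ HB' HC') as fBC.
  pose proof (edge_plane _ _ _ HC' HD') as fCD. pose proof (edge_plane _ _ _ HD' HA') as fDA.
  rewrite (cross_plane (vsub B A) (vsub C B) P eAB eBC) in H1, H2, H3, H4.
  rewrite (cross_plane (vsub C B) (vsub D C) P eBC eCD) in H2.
  rewrite (cross_plane (vsub D C) (vsub A D) P eCD eDA) in H3.
  rewrite (cross_plane (vsub A D) (vsub B A) P eDA eAB) in H4.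
  rewrite (cross_plane (vsub B' A') (vsub C' B') P' fAB fBC).
  rewrite (cross_plane (vsub C' B') (vsub D' C') P' fBC fCD).
  rewrite (cross_plane (vsub D' C') (vsub A' D') P' fCD fDA).
  rewrite (cross_plane (vsub A' D') (vsub B' A') P' fDA fAB).
  rewrite !dot_nrm in *.
  assert (Hq : 0 < vx P ^ 2 + vy P ^ 2 + 1) by nra.
  assert (Hq' : 0 < vx P' ^ 2 + vy P' ^ 2 + 1) by nra.
  apply (pos_factor _ _ Hq) in H1. apply (pos_factor _ _ Hq) in H2.
  apply (pos_factor _ _ Hq) in H3. apply (pos_factor _ _ Hq) in H4.
  split.
  - unfold Lp, lin in *. vunf. nra.
  - unfold k2 in *. vunf. rewrite x1, y1, x2, y2, x3, y3, x4, y4.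
    repeat split; apply Rmult_lt_0_compat; auto.
Qed.

Lemma cong_face (F G : net_of) i j P P' :
  Lp (F i j) P = 0 -> Lp (F (S i) j) P = 0 -> Lp (F (S i) (S j)) P = 0 -> Lp (F i (S j)) P = 0 ->
  Lp (G i j) P' = 0 -> Lp (G (S i) j) P' = 0 -> Lp (G (S i) (S j)) P' = 0 -> Lp (G i (S j)) P' = 0 ->
  vx (G i j) = vx (F i j) -> vy (G i j) = vy (F i j) ->
  vx (G (S i) j) = vx (F (S i) j) -> vy (G (S i) j) = vy (F (S i) j) ->
  vx (G (S i) (S j)) = vx (F (S i) (S j)) -> vy (G (S i) (S j)) = vy (F (S i) (S j)) ->
  vx (G i (S j)) = vx (F i (S j)) -> vy (G i (S j)) = vy (F i (S j)) ->
  faces_iso_congruent F G i j.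
Proof.
  intros. exists 0, (vx P' - vx P), (vy P' - vy P), (mk3 0 0 (vz P - vz P')).
  unfold iso_cong. rewrite cos_0, sin_0.
  unfold Lp, lin in *.
  refine (conj _ (conj _ (conj _ _))); apply vec_eq; unfold mk3, vx, vy, vz in *; simpl in *;
  repeat match goal with H : fst (fst (G _ _)) = _ |- _ => rewrite H in *; clear H end;
  repeat match goal with H : snd (fst (G _ _)) = _ |- _ => rewrite H in *; clear H end; lra.
Qed.

Lemma dual_top_plane (H : net_of) i j P :
  Lp (H i j) P = 0 -> Lp (H (S i) j) P = 0 -> Lp (H i (S j)) P = 0 ->
  k2 (vsub (H (S i) j) (H i j)) (vsub (H i (S j)) (H i j)) <> 0 ->
  dual_top H i j = (vx P, vy P).
Proof.
  intros h1 h2 h3 hk. unfold dual_top.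
  rewrite (cross_plane _ _ P (edge_plane _ _ _ h1 h2) (edge_plane _ _ _ h1 h3)).
  unfold nrm, k2 in *. vunf. f_equal; field; exact hk.
Qed.

Lemma cp_sq sigma k t : 0 <= t -> continuity_pt (fun t => sq sigma t k) t.
Proof. intros Ht. unfold sq. apply cp_sqrt. apply cp_plus. apply cp_id. apply cp_const. nra. Qed.

Lemma cp_coef sigma k t : 0 <= t -> 0 < sigma k ->
  continuity_pt (fun t => (sigma k + sigma (k - 1)%nat) / (sq sigma t k + sq sigma t (k - 1)%nat)) t.
Proof. intros Ht Hk. apply cp_div. apply cp_const. apply cp_plus; apply cp_sq; auto.
  pose proof (sq_pos sigma t k Ht Hk). assert (0 <= sq sigma t (k-1)) by (unfold sq; apply sqrt_pos). lra. Qed.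

Lemma cp_vsum (pr : vec3 -> R) (c : R -> nat -> R) (w : nat -> vec3) i t :
  (forall u v, pr (vadd u v) = pr u + pr v) -> (forall s u, pr (vscale s u) = s * pr u) ->
  pr vzero = 0 ->
  (forall k, (1 <= k <= i)%nat -> continuity_pt (fun x => c x k) t) ->
  continuity_pt (fun x => pr (vsum1 (fun k => vscale (c x k) (w k)) i)) t.
Proof.
  intros hpa hps hp0 Hc. induction i as [|i IH].
  - apply (cp_ext' _ (fun _ => 0)). intro x. cbn [vsum1]. exact hp0. apply cp_const.
  - apply (cp_ext' _ (fun x => pr (vsum1 (fun k => vscale (c x k) (w k)) i) + c x (S i) * pr (w (S i)))).
    intro x. cbn [vsum1]. rewrite hpa, hps. reflexivity.
    apply cp_plus. apply IH. intros; apply Hc; lia. apply cp_mult. apply Hc; lia. apply cp_const.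
Qed.

Lemma cp_Pt (pr : vec3 -> R) a b sigma i j t :
  (forall u v, pr (vadd u v) = pr u + pr v) -> (forall s u, pr (vscale s u) = s * pr u) ->
  pr vzero = 0 ->
  0 <= t -> (forall k, (k <= i)%nat -> 0 < sigma k) ->
  continuity_pt (fun t => pr (P_t a b sigma i j t)) t.
Proof.
  intros hpa hps hp0 Ht Hs.
  apply (cp_ext' _ (fun x => pr (a 0%nat) + pr (vsum1 (fun k => vscale ((sigma k + sigma (k - 1)%nat) /
                                  (sq sigma x k + sq sigma x (k - 1)%nat))
                                 (vsub (a k) (a (k - 1)%nat))) i) + sq sigma x i * pr (b j))).
  { intro x. unfold P_t. rewrite !hpa, hps. reflexivity. }
  apply cp_plus. apply cp_plus. apply cp_const.
  apply (cp_vsum pr (fun x k => (sigma k + sigma (k - 1)%nat) / (sq sigma x k + sq sigma x (k - 1)%nat))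
     (fun k => vsub (a k) (a (k - 1)%nat))); auto.
  intros k Hk. apply cp_coef; auto. apply Hs; lia.
  apply cp_mult. apply cp_sq; auto. apply cp_const.
Qed.

Lemma vz_Tp db D X : vz (Tp db D X) = - / det3 e3 db D *
   (vx X * vx (cross db D) + vy X * vy (cross db D) + vz X * vz (cross db D)).
Proof. unfold Tp; vunf; ring. Qed.

Lemma face_k2 A B C D P : convex_quad A B C D ->
  Lp A P = 0 -> Lp B P = 0 -> Lp D P = 0 -> k2 (vsub B A) (vsub D A) <> 0.
Proof.
  intros [_ [_ [_ [_ H4]]]] hA hB hD. cbv zeta in H4.
  rewrite (cross_plane (vsub A D) (vsub B A) P (edge_plane _ _ _ hD hA) (edge_plane _ _ _ hA hB)) in H4.
  intro Hk. assert (k2 (vsub A D) (vsub B A) = 0) by (unfold k2 in *; vunf; lra).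
  rewrite H in H4. unfold nrm in H4; vunf. lra.
Qed.

Lemma Tp_L_all db D X Y : det3 e3 db D <> 0 ->
  (exists u v, vsub Y X = vadd (vscale u db) (vscale v D)) -> Lp (Tp db D X) Y = 0.
Proof.
  intros H [u [v E]]. rewrite (Lp_shift _ X Y), Tp_Lp by exact H. rewrite E.
  rewrite Tp_lin; auto. ring. unfold cross; vunf; ring.
Qed.

Lemma vsub_split Y Z X : vsub Y X = vadd (vsub Y Z) (vsub Z X).
Proof. apply vec_eq; vunf; ring. Qed.

Lemma GL a b sigma t i j : 0 <= t -> 0 < sigma i -> 0 < sigma (S i) ->
  det3 e3 (vsub (b (S j)) (b j)) (Delta a b sigma i j) <> 0 ->
  let G := T_family a b sigma t i j in
  Lp G (P_t a b sigma i j t) = 0 /\ Lp G (P_t a b sigma (S i) j t) = 0 /\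
  Lp G (P_t a b sigma i (S j) t) = 0 /\ Lp G (P_t a b sigma (S i) (S j) t) = 0.
Proof.
  intros Ht H1 H2 Hd G. unfold G, T_family. rewrite T_point_Tp.
  split; [|split; [|split]]; apply Tp_L_all; auto.
  - exists 0, 0. apply vec_eq; vunf; ring.
  - exists 0, (coefk sigma t i). rewrite K1 by auto. apply vec_eq; vunf; ring.
  - exists (sq sigma t i), 0. rewrite K2. apply vec_eq; vunf; ring.
  - exists (sq sigma t (S i)), (coefk sigma t i).
    rewrite (vsub_split _ (P_t a b sigma (S i) j t)). rewrite K1, K2 by auto.
    apply vec_eq; vunf; ring.
Qed.

Definition top (X : vec3) : R * R := (vx X, vy X).

Lemma coefk_mul sigma t i : 0 <= t -> 0 < sigma i -> 0 < sigma (S i) ->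
  coefk sigma t i * (sq sigma t (S i) + sq sigma t i) = sigma (S i) + sigma i.
Proof. intros. unfold coefk. pose proof (sq_pos sigma t i H H0). pose proof (sq_pos sigma t (S i) H H1).
  field. lra. Qed.

Lemma curv_formula (H : net_of) a b sigma t i j : (1 <= i)%nat -> (1 <= j)%nat -> 0 <= t ->
  0 < sigma i -> 0 < sigma (S i) ->
  dual_top H (i - 1) (j - 1) = top (P_t a b sigma i j t) ->
  dual_top H i (j - 1) = top (P_t a b sigma (S i) j t) ->
  dual_top H i j = top (P_t a b sigma (S i) (S j) t) ->
  dual_top H (i - 1) j = top (P_t a b sigma i (S j) t) ->
  curvature H i j = / 2 * ((sigma (S i) + sigma i) *
     k2 (Delta a b sigma i j) (vsub (b (S j)) (b j))).
Proof.
  intros Hi Hj Ht H1 H2 E1 E2 E3 E4. unfold curvature. rewrite E1, E2, E3, E4.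
  pose proof (K1 a b sigma i j t Ht H1 H2) as k1.
  pose proof (K2 a b sigma i j t) as k2a. pose proof (K2 a b sigma (S i) j t) as k2b.
  pose proof (coefk_mul sigma t i Ht H1 H2) as cm.
  set (p1 := P_t a b sigma i j t) in *. set (p2 := P_t a b sigma (S i) j t) in *.
  set (p3 := P_t a b sigma (S i) (S j) t) in *. set (p4 := P_t a b sigma i (S j) t) in *.
  set (k := coefk sigma t i) in *. set (s := sq sigma t i) in *. set (s' := sq sigma t (S i)) in *.
  set (D := Delta a b sigma i j) in *. set (d := vsub (b (S j)) (b j)) in *.
  assert (x2 : vx p2 = vx p1 + k * vx D) by (apply (f_equal vx) in k1; vunf; lra).
  assert (y2 : vy p2 = vy p1 + k * vy D) by (apply (f_equal vy) in k1; vunf; lra).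
  assert (x4 : vx p4 = vx p1 + s * vx d) by (apply (f_equal vx) in k2a; vunf; lra).
  assert (y4 : vy p4 = vy p1 + s * vy d) by (apply (f_equal vy) in k2a; vunf; lra).
  assert (x3 : vx p3 = vx p2 + s' * vx d) by (apply (f_equal vx) in k2b; vunf; lra).
  assert (y3 : vy p3 = vy p2 + s' * vy d) by (apply (f_equal vy) in k2b; vunf; lra).
  unfold top, det2; simpl. rewrite x3, y3. rewrite x2, y2, x4, y4. rewrite <- cm.
  unfold k2. ring.
Qed.

Lemma lin3_zero A B C W : k2 (vsub B A) (vsub C A) <> 0 ->
  lin A W = 0 -> lin B W = 0 -> lin C W = 0 -> vx W = 0 /\ vy W = 0 /\ vz W = 0.
Proof.
  intros Hk hA hB hC.
  assert (Ex : vx W * k2 (vsub B A) (vsub C A) =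
     (lin B W - lin A W) * (vy C - vy A) - (lin C W - lin A W) * (vy B - vy A))
    by (unfold lin, k2; vunf; ring).
  assert (Ey : vy W * k2 (vsub B A) (vsub C A) =
     - (lin B W - lin A W) * (vx C - vx A) + (lin C W - lin A W) * (vx B - vx A))
    by (unfold lin, k2; vunf; ring).
  rewrite hA, hB, hC in Ex, Ey.
  assert (vx W = 0) by (apply (Rmult_eq_reg_r (k2 (vsub B A) (vsub C A))); auto; lra).
  assert (vy W = 0) by (apply (Rmult_eq_reg_r (k2 (vsub B A) (vsub C A))); auto; lra).
  unfold lin in hA. rewrite H, H0 in hA. split; [|split]; auto. lra.
Qed.

Lemma vx_sub u v : vx (vsub u v) = vx u - vx v. Proof. reflexivity. Qed.
Lemma vy_sub u v : vy (vsub u v) = vy u - vy v. Proof. reflexivity. Qed.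

Lemma partD m n F a b sigma :
  (1 <= m)%nat -> (2 <= n)%nat -> is_net m n F ->
  (forall k, (k <= S m)%nat -> 0 < sigma k) ->
  (forall i j, (i <= m)%nat -> (j <= n)%nat ->
       det3 e3 (vsub (b (S j)) (b j)) (Delta a b sigma i j) <> 0 /\
       F i j = T_point a b sigma i j (vadd (a i) (vscale (sigma i) (b j)))) ->
  exists eps, 0 < eps /\ nontrivial_deformation m n F eps (T_family a b sigma).
Proof.
  intros Hm Hn Hnet Hs HR.
  set (G := T_family a b sigma).
  assert (G0 : forall i j, (i <= m)%nat -> (j <= n)%nat -> G 0 i j = F i j).
  { intros i j Hi Hj. destruct (HR i j Hi Hj) as [_ ->]. unfold G, T_family.
    rewrite K3. reflexivity. intros; apply Hs; lia. }
  assert (GLt : forall t i j, 0 <= t -> (i <= m)%nat -> (j <= n)%nat ->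
    Lp (G t i j) (P_t a b sigma i j t) = 0 /\ Lp (G t i j) (P_t a b sigma (S i) j t) = 0 /\
    Lp (G t i j) (P_t a b sigma i (S j) t) = 0 /\ Lp (G t i j) (P_t a b sigma (S i) (S j) t) = 0).
  { intros t i j Ht Hi Hj. apply GL; [exact Ht | apply Hs; lia | apply Hs; lia | apply HR; auto]. }
  assert (Gx : forall t i j, (i <= m)%nat -> (j <= n)%nat -> vx (G t i j) = vx (F i j)).
  { intros t i j Hi Hj. rewrite <- G0 by auto. unfold G, T_family. rewrite !T_point_Tp. apply Tp_x. }
  assert (Gy : forall t i j, (i <= m)%nat -> (j <= n)%nat -> vy (G t i j) = vy (F i j)).
  { intros t i j Hi Hj. rewrite <- G0 by auto. unfold G, T_family. rewrite !T_point_Tp. apply Tp_y. }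
  assert (GF : forall t i j, 0 <= t -> (i < m)%nat -> (j < n)%nat ->
    Lp (G t i j) (P_t a b sigma (S i) (S j) t) = 0 /\ Lp (G t (S i) j) (P_t a b sigma (S i) (S j) t) = 0 /\
    Lp (G t (S i) (S j)) (P_t a b sigma (S i) (S j) t) = 0 /\ Lp (G t i (S j)) (P_t a b sigma (S i) (S j) t) = 0).
  { intros t i j Ht Hi Hj.
    destruct (GLt t i j Ht ltac:(lia) ltac:(lia)) as [_ [_ [_ h1]]].
    destruct (GLt t (S i) j Ht ltac:(lia) ltac:(lia)) as [_ [_ [h2 _]]].
    destruct (GLt t (S i) (S j) Ht ltac:(lia) ltac:(lia)) as [h3 _].
    destruct (GLt t i (S j) Ht ltac:(lia) ltac:(lia)) as [_ [h4 _]].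
    auto. }
  assert (FF : forall i j, (i < m)%nat -> (j < n)%nat ->
    Lp (F i j) (P_t a b sigma (S i) (S j) 0) = 0 /\ Lp (F (S i) j) (P_t a b sigma (S i) (S j) 0) = 0 /\
    Lp (F (S i) (S j)) (P_t a b sigma (S i) (S j) 0) = 0 /\ Lp (F i (S j)) (P_t a b sigma (S i) (S j) 0) = 0).
  { intros i j Hi Hj. rewrite <- !G0 by lia. apply GF; auto; lra. }
  assert (Fk : forall i j, (i < m)%nat -> (j < n)%nat ->
     k2 (vsub (F (S i) j) (F i j)) (vsub (F i (S j)) (F i j)) <> 0).
  { intros i j Hi Hj. destruct (FF i j Hi Hj) as [h1 [h2 [h3 h4]]].
    eapply face_k2; [apply Hnet; auto| exact h1| exact h2| exact h4]. }
  assert (Gk : forall t i j, (i < m)%nat -> (j < n)%nat ->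
     k2 (vsub (G t (S i) j) (G t i j)) (vsub (G t i (S j)) (G t i j)) <> 0).
  { intros t i j Hi Hj. unfold k2. rewrite !vx_sub, !vy_sub, !Gx, !Gy by lia.
    rewrite <- !vx_sub, <- !vy_sub. apply Fk; auto. }
  assert (DTG : forall t i j, 0 <= t -> (i < m)%nat -> (j < n)%nat ->
     dual_top (G t) i j = top (P_t a b sigma (S i) (S j) t)).
  { intros t i j Ht Hi Hj. destruct (GF t i j Ht Hi Hj) as [h1 [h2 [h3 h4]]].
    apply dual_top_plane; auto. }
  assert (DTF : forall i j, (i < m)%nat -> (j < n)%nat ->
     dual_top F i j = top (P_t a b sigma (S i) (S j) 0)).
  { intros i j Hi Hj. destruct (FF i j Hi Hj) as [h1 [h2 [h3 h4]]].
    apply dual_top_plane; auto. }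
  exists 1. split; [lra|]. split.
  - split; [|split; [|split; [|split]]].
    + exact G0.
    + intros i j Hi Hj. split; [|split]; apply cp_interval; intros t Ht.
      * apply (cp_ext' _ (fun _ => vx (F i j))). intro x; apply Gx; auto. apply cp_const.
      * apply (cp_ext' _ (fun _ => vy (F i j))). intro x; apply Gy; auto. apply cp_const.
      * set (cc := cross (vsub (b (S j)) (b j)) (Delta a b sigma i j)).
        apply (cp_ext' _ (fun x => - / det3 e3 (vsub (b (S j)) (b j)) (Delta a b sigma i j) *
           (vx (P_t a b sigma i j x) * vx cc + vy (P_t a b sigma i j x) * vy cc + vz (P_t a b sigma i j x) * vz cc))).
        { intro x. unfold G, T_family. rewrite T_point_Tp, vz_Tp. reflexivity. }
        assert (Hsi : forall k, (k <= i)%nat -> 0 < sigma k) by (intros; apply Hs; lia).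
        apply cp_mult. apply cp_const. apply cp_plus. apply cp_plus.
        all: apply cp_mult; [apply cp_Pt; [intros; reflexivity|intros; reflexivity|reflexivity|lra|exact Hsi]|apply cp_const].
    + intros t Ht i j Hi Hj. destruct (GF t i j ltac:(lra) Hi Hj) as [h1 [h2 [h3 h4]]].
      destruct (FF i j Hi Hj) as [f1 [f2 [f3 f4]]].
      eapply convex_transfer; [exact (Hnet i j Hi Hj)| exact f1| exact f2| exact f3| exact f4
        | exact h1| exact h2| exact h3| exact h4|..]; (apply Gx || apply Gy); lia.
    + intros t Ht i j Hi Hj. destruct (GF t i j ltac:(lra) Hi Hj) as [h1 [h2 [h3 h4]]].
      destruct (FF i j Hi Hj) as [f1 [f2 [f3 f4]]].
      eapply cong_face; [exact f1| exact f2| exact f3| exact f4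
        | exact h1| exact h2| exact h3| exact h4|..]; (apply Gx || apply Gy); lia.
    + intros t Ht i j Hi1 Hi Hj1 Hj.
      destruct i as [|i0]; [lia|]. destruct j as [|j0]; [lia|].
      assert (0 < sigma (S i0)) by (apply Hs; lia). assert (0 < sigma (S (S i0))) by (apply Hs; lia).
      rewrite (curv_formula (G t) a b sigma t (S i0) (S j0)), (curv_formula F a b sigma 0 (S i0) (S j0));
        [reflexivity|..]; try lia; try lra.
      all: try (replace (S i0 - 1)%nat with i0 by lia); try (replace (S j0 - 1)%nat with j0 by lia).
      all: try (apply DTG; [lra|lia|lia]); try (apply DTF; lia).
  - intros Hall. destruct (Hall 1 ltac:(lra)) as [phi [c1 [c2 [bb Hc]]]].
    assert (FL : forall i j, (i <= m)%nat -> (j <= n)%nat ->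
      Lp (F i j) (P_t a b sigma i j 0) = 0 /\ Lp (F i j) (P_t a b sigma (S i) j 0) = 0 /\
      Lp (F i j) (P_t a b sigma i (S j) 0) = 0 /\ Lp (F i j) (P_t a b sigma (S i) (S j) 0) = 0).
    { intros i j Hi Hj. rewrite <- G0 by auto. apply GLt; auto; lra. }
    set (V := mk3 c1 c2 (- vz bb)).
    assert (KEY : forall i j i' j', (i <= m)%nat -> (j <= n)%nat ->
      Lp (G 1 i j) (P_t a b sigma i' j' 1) = 0 -> Lp (F i j) (P_t a b sigma i' j' 0) = 0 ->
      lin (F i j) (vsub (vsub (P_t a b sigma i' j' 1) (P_t a b sigma i' j' 0)) V) = 0).
    { intros i j i' j' Hi Hj h1 h0. pose proof (Hc i j Hi Hj) as E.
      pose proof (Gx 1 i j Hi Hj) as ex. pose proof (Gy 1 i j Hi Hj) as ey.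
      apply (f_equal vz) in E. unfold iso_cong in E.
      unfold Lp, lin, V in *. rewrite ex, ey in h1. vunf. lra. }
    assert (W11 := lin3_zero (F 0%nat 0%nat) (F 1%nat 0%nat) (F 0%nat 1%nat)
       (vsub (vsub (P_t a b sigma 1%nat 1%nat 1) (P_t a b sigma 1%nat 1%nat 0)) V) (Fk 0%nat 0%nat ltac:(lia) ltac:(lia))).
    assert (W12 := lin3_zero (F 0%nat 1%nat) (F 1%nat 1%nat) (F 0%nat 2%nat)
       (vsub (vsub (P_t a b sigma 1%nat 2%nat 1) (P_t a b sigma 1%nat 2%nat 0)) V) (Fk 0%nat 1%nat ltac:(lia) ltac:(lia))).
    destruct W11 as [x11 [y11 z11]].
    { apply KEY; try lia. destruct (GLt 1 0%nat 0%nat ltac:(lra) ltac:(lia) ltac:(lia)) as [_ [_ [_ h]]]; exact h. destruct (FL 0%nat 0%nat ltac:(lia) ltac:(lia)) as [_ [_ [_ h]]]; exact h. }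
    { apply KEY; try lia. destruct (GLt 1 1%nat 0%nat ltac:(lra) ltac:(lia) ltac:(lia)) as [_ [_ [h _]]]; exact h. destruct (FL 1%nat 0%nat ltac:(lia) ltac:(lia)) as [_ [_ [h _]]]; exact h. }
    { apply KEY; try lia. destruct (GLt 1 0%nat 1%nat ltac:(lra) ltac:(lia) ltac:(lia)) as [_ [h _]]; exact h. destruct (FL 0%nat 1%nat ltac:(lia) ltac:(lia)) as [_ [h _]]; exact h. }
    destruct W12 as [x12 [y12 z12]].
    { apply KEY; try lia. destruct (GLt 1 0%nat 1%nat ltac:(lra) ltac:(lia) ltac:(lia)) as [_ [_ [_ h]]]; exact h. destruct (FL 0%nat 1%nat ltac:(lia) ltac:(lia)) as [_ [_ [_ h]]]; exact h. }
    { apply KEY; try lia. destruct (GLt 1 1%nat 1%nat ltac:(lra) ltac:(lia) ltac:(lia)) as [_ [_ [h _]]]; exact h. destruct (FL 1%nat 1%nat ltac:(lia) ltac:(lia)) as [_ [_ [h _]]]; exact h. }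
    { apply KEY; try lia. destruct (GLt 1 0%nat 2%nat ltac:(lra) ltac:(lia) ltac:(lia)) as [_ [h _]]; exact h. destruct (FL 0%nat 2%nat ltac:(lia) ltac:(lia)) as [_ [h _]]; exact h. }
    pose proof (K2 a b sigma 1%nat 1%nat 1) as k1. pose proof (K2 a b sigma 1%nat 1%nat 0) as k0.
    rewrite sq_0 in k0 by (apply Hs; lia).
    assert (Hsq : sq sigma 1 1%nat <> sigma 1%nat).
    { intro E. pose proof (sq_sq sigma 1 1%nat%nat ltac:(lra)). rewrite E in H. nra. }
    assert (D0 : vsub (b 2%nat) (b 1%nat) = vzero).
    { apply (f_equal vx) in k1 as kx1. apply (f_equal vy) in k1 as ky1. apply (f_equal vz) in k1 as kz1.
      apply (f_equal vx) in k0 as kx0. apply (f_equal vy) in k0 as ky0. apply (f_equal vz) in k0 as kz0.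
      vunf. apply vec_eq; vunf.
      - apply (Rmult_eq_reg_l (sq sigma 1 1%nat - sigma 1%nat)); [|lra]. nra.
      - apply (Rmult_eq_reg_l (sq sigma 1 1%nat - sigma 1%nat)); [|lra]. nra.
      - apply (Rmult_eq_reg_l (sq sigma 1 1%nat - sigma 1%nat)); [|lra]. nra. }
    destruct (HR 0%nat 1%nat ltac:(lia) ltac:(lia)) as [Hd _]. apply Hd. rewrite D0. vunf. ring.
Qed.


Lemma vzero_dec (Y : vec3) : Y = vzero \/ (vx Y <> 0 \/ vy Y <> 0 \/ vz Y <> 0).
Proof. destruct (Req_dec (vx Y) 0), (Req_dec (vy Y) 0), (Req_dec (vz Y) 0); auto.
  left. apply vec_eq; auto. Qed.

Lemma ker_xy_nz A Y : lin A Y = 0 -> Y <> vzero -> vx Y <> 0 \/ vy Y <> 0.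
Proof. intros h hY. destruct (Req_dec (vx Y) 0), (Req_dec (vy Y) 0); auto.
  exfalso. apply hY. apply vec_eq; auto. unfold lin in h. vunf. rewrite H, H0 in h. simpl. lra. Qed.

Lemma KL1 A B X Y w : k2 (vsub B A) w <> 0 -> lin A X = 0 -> lin B X = 0 -> lin A Y = 0 -> lin B Y = 0 ->
  Y <> vzero -> X = vscale (dot X Y / dot Y Y) Y.
Proof.
  intros Hk hAX hBX hAY hBY hY.
  assert (gX : vx (vsub B A) * vx X + vy (vsub B A) * vy X = 0) by (unfold lin in *; vunf; lra).
  assert (gY : vx (vsub B A) * vx Y + vy (vsub B A) * vy Y = 0) by (unfold lin in *; vunf; lra).
  assert (Hg : vx (vsub B A) <> 0 \/ vy (vsub B A) <> 0).
  { destruct (Req_dec (vx (vsub B A)) 0), (Req_dec (vy (vsub B A)) 0); auto.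
    exfalso. apply Hk. unfold k2. rewrite H, H0. ring. }
  assert (kk : vx X * vy Y - vy X * vx Y = 0).
  { destruct Hg as [Hg|Hg].
    - apply (Rmult_eq_reg_l (vx (vsub B A))); auto.
      transitivity (vy Y * (vx (vsub B A) * vx X + vy (vsub B A) * vy X) - vy X * (vx (vsub B A) * vx Y + vy (vsub B A) * vy Y)); [ring|].
      rewrite gX, gY; ring.
    - apply (Rmult_eq_reg_l (vy (vsub B A))); auto.
      transitivity (- vx Y * (vx (vsub B A) * vx X + vy (vsub B A) * vy X) + vx X * (vx (vsub B A) * vx Y + vy (vsub B A) * vy Y)); [ring|].
      rewrite gX, gY; ring. }
  pose proof (ker_xy_nz A Y hAY hY) as HY.
  assert (zX : vz X = vx A * vx X + vy A * vy X) by (unfold lin in *; lra).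
  assert (zY : vz Y = vx A * vx Y + vy A * vy Y) by (unfold lin in *; lra).
  assert (Hd : dot Y Y > 0) by (unfold dot; destruct HY; nra).
  assert (exists c, vx X = c * vx Y /\ vy X = c * vy Y) as [c [cx cy]].
  { destruct HY as [HY|HY].
    - exists (vx X / vx Y). split; field_simplify; auto. apply (Rmult_eq_reg_l (vx Y)); auto. field_simplify; auto. nra.
    - exists (vy X / vy Y). split; field_simplify; auto. apply (Rmult_eq_reg_l (vy Y)); auto. field_simplify; auto. nra. }
  assert (cz : vz X = c * vz Y) by (rewrite zX, zY, cx, cy; ring).
  assert (Hc : dot X Y / dot Y Y = c).
  { unfold dot. rewrite cx, cy, cz. field. unfold dot in Hd; lra. }
  rewrite Hc. apply vec_eq; vunf; unfold vx, vy, vz in *; lra.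
Qed.

Lemma E4L A B C X Y : k2 (vsub B A) (vsub C A) <> 0 -> lin A X = 0 -> lin B X = 0 ->
  lin A Y = 0 -> lin C Y = 0 -> X <> vzero -> Y <> vzero -> det3 e3 X Y <> 0.
Proof.
  intros Hk hAX hBX hAY hCY hX hY0.
  set (g := vsub B A) in *. set (h := vsub C A) in *.
  assert (gX : vx g * vx X + vy g * vy X = 0) by (unfold g, lin in *; vunf; lra).
  assert (hY : vx h * vx Y + vy h * vy Y = 0) by (unfold h, lin in *; vunf; lra).
  assert (Ed : det3 e3 X Y = vx X * vy Y - vy X * vx Y) by (vunf; ring).
  rewrite Ed. clear Ed.
  assert (BC : (vx X * vy Y - vy X * vx Y) * k2 g h =
     (vx X * vx g + vy X * vy g) * (vx Y * vx h + vy Y * vy h)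
     - (vx X * vx h + vy X * vy h) * (vx Y * vx g + vy Y * vy g)) by (unfold k2; ring).
  assert (I1 : forall Z, vx Z * k2 g h = (vx Z * vx g + vy Z * vy g) * vy h - (vx Z * vx h + vy Z * vy h) * vy g)
    by (intros; unfold k2; ring).
  assert (I2 : forall Z, vy Z * k2 g h = - (vx Z * vx g + vy Z * vy g) * vx h + (vx Z * vx h + vy Z * vy h) * vx g)
    by (intros; unfold k2; ring).
  assert (Xh : vx X * vx h + vy X * vy h <> 0).
  { intro E. destruct (ker_xy_nz A X hAX hX) as [H|H]; apply H.
    - apply (Rmult_eq_reg_r (k2 g h)); auto. rewrite I1. replace (vx X * vx g + vy X * vy g) with 0 by lra. rewrite E. ring.
    - apply (Rmult_eq_reg_r (k2 g h)); auto. rewrite I2. replace (vx X * vx g + vy X * vy g) with 0 by lra. rewrite E. ring. }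
  assert (Yg : vx Y * vx g + vy Y * vy g <> 0).
  { intro E. destruct (ker_xy_nz A Y hAY hY0) as [H|H]; apply H.
    - apply (Rmult_eq_reg_r (k2 g h)); auto. rewrite I1. replace (vx Y * vx h + vy Y * vy h) with 0 by lra. rewrite E. ring.
    - apply (Rmult_eq_reg_r (k2 g h)); auto. rewrite I2. replace (vx Y * vx h + vy Y * vy h) with 0 by lra. rewrite E. ring. }
  intro E. rewrite E in BC. rewrite Rmult_0_l in BC.
  assert (vx X * vx g + vy X * vy g = 0) by lra. rewrite H in BC.
  assert (vx Y * vx h + vy Y * vy h = 0) by lra. rewrite H0 in BC.
  apply (Rmult_integral_contrapositive_currified _ _ Xh Yg). lra.
Qed.

Lemma k2_swap u v : k2 u v = - k2 v u. Proof. unfold k2; ring. Qed.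
Lemma k2_neg_l u v : k2 (vsub (vzero) u) v = - k2 u v. Proof. unfold k2; vunf; ring. Qed.

Lemma corners A B C D P : convex_quad A B C D ->
  Lp A P = 0 -> Lp B P = 0 -> Lp C P = 0 -> Lp D P = 0 ->
  k2 (vsub B A) (vsub D A) <> 0 /\ k2 (vsub A B) (vsub C B) <> 0 /\
  k2 (vsub B C) (vsub D C) <> 0 /\ k2 (vsub C D) (vsub A D) <> 0.
Proof.
  intros Hc hA hB hC hD. unfold convex_quad in Hc; cbv zeta in Hc.
  destruct Hc as [_ [H1 [H2 [H3 H4]]]].
  pose proof (edge_plane _ _ _ hA hB) as eAB. pose proof (edge_plane _ _ _ hB hC) as eBC.
  pose proof (edge_plane _ _ _ hC hD) as eCD. pose proof (edge_plane _ _ _ hD hA) as eDA.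
  rewrite (cross_plane (vsub B A) (vsub C B) P eAB eBC) in H1, H2, H3, H4.
  rewrite (cross_plane (vsub C B) (vsub D C) P eBC eCD) in H2.
  rewrite (cross_plane (vsub D C) (vsub A D) P eCD eDA) in H3.
  rewrite (cross_plane (vsub A D) (vsub B A) P eDA eAB) in H4.
  rewrite !dot_nrm in *.
  assert (Hq : 0 < vx P ^ 2 + vy P ^ 2 + 1) by nra.
  apply (pos_factor _ _ Hq) in H1.
  apply (pos_factor _ _ Hq) in H2. apply (pos_factor _ _ Hq) in H3. apply (pos_factor _ _ Hq) in H4.
  assert (eA : k2 (vsub B A) (vsub D A) = k2 (vsub A D) (vsub B A)) by (unfold k2; vunf; ring).
  assert (eB : k2 (vsub A B) (vsub C B) = - k2 (vsub B A) (vsub C B)) by (unfold k2; vunf; ring).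
  assert (eC : k2 (vsub B C) (vsub D C) = - k2 (vsub C B) (vsub D C)) by (unfold k2; vunf; ring).
  assert (eD : k2 (vsub C D) (vsub A D) = - k2 (vsub D C) (vsub A D)) by (unfold k2; vunf; ring).
  rewrite eA, eB, eC, eD.
  split; [|split; [|split]]; intro E.
  - rewrite E in H4. lra.
  - assert (k2 (vsub B A) (vsub C B) = 0) by lra. rewrite H in H1. lra.
  - assert (k2 (vsub C B) (vsub D C) = 0) by lra. rewrite H in H2. lra.
  - assert (k2 (vsub D C) (vsub A D) = 0) by lra. rewrite H in H3. lra.
Qed.

Lemma dual_unique A B C P Q : k2 (vsub B A) (vsub C A) <> 0 ->
  Lp A P = 0 -> Lp B P = 0 -> Lp C P = 0 -> Lp A Q = 0 -> Lp B Q = 0 -> Lp C Q = 0 -> P = Q.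
Proof.
  intros Hk a1 b1 c1 a2 b2 c2.
  destruct (lin3_zero A B C (vsub P Q) Hk) as [hx [hy hz]].
  - rewrite lin_sub. unfold Lp in *. lra.
  - rewrite lin_sub. unfold Lp in *. lra.
  - rewrite lin_sub. unfold Lp in *. lra.
  - apply vec_eq; vunf; unfold vx, vy, vz in *; simpl in *; lra.
Qed.

Definition Rv (M : vec3) (e : R) (P : vec3) : vec3 := vadd (mk3 (vx M) (vy M) e) (vscale (vz M) P).

Lemma Rv_lin M e P X : dot M X = e -> Lp X P = 0 -> lin X (Rv M e P) = 0.
Proof. unfold Rv, Lp, lin; vunf; intros; nra. Qed.

Lemma Rv_zero M e P X : M <> vzero -> Rv M e P = vzero -> dot M X = e -> Lp X P = 0.
Proof.
  intros HM HR HX.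
  assert (Hz : vz M <> 0).
  { intro Hz. apply HM. pose proof (f_equal vx HR) as rx. pose proof (f_equal vy HR) as ry.
    pose proof (f_equal vz HR) as rz. unfold Rv in *. vunf. apply vec_eq; vunf; rewrite Hz in *; lra. }
  pose proof (f_equal vx HR) as rx. pose proof (f_equal vy HR) as ry. pose proof (f_equal vz HR) as rz.
  unfold Rv, Lp, lin in *. vunf.
  apply (Rmult_eq_reg_l (snd M)); auto. nra.
Qed.

Lemma Rv_sub M e P Q : vsub (Rv M e P) (Rv M e Q) = vscale (vz M) (vsub P Q).
Proof. unfold Rv; apply vec_eq; vunf; ring. Qed.

Lemma row_plane n F i : in_some_plane (line_i n F i) ->
  exists M e, M <> vzero /\ forall j, (j <= n)%nat -> dot M (F i j) = e.
Proof. intros [N [d [HN H]]]. exists N, d. split; auto. intros j Hj. apply H. exists j; auto. Qed.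

Lemma col_iso m F j : in_some_isotropic_plane (line_j m F j) ->
  exists u, u <> vzero /\ forall i, (i <= m)%nat -> lin (F i j) u = 0.
Proof.
  intros [N [d [HN [Hz H]]]]. exists (mk3 (vx N) (vy N) d). split.
  - intro E. apply HN. apply (f_equal vx) in E as ex. apply (f_equal vy) in E as ey.
    apply vec_eq; vunf; unfold vx, vy, vz in *; simpl in *; auto.
  - intros i Hi. assert (E := H (F i j) (ex_intro _ i (conj Hi eq_refl))).
    unfold lin; vunf; unfold vx,vy,vz in *. rewrite Hz in E. lra.
Qed.

Lemma det3_e3_scale_l s X Y : det3 e3 (vscale s X) Y = s * det3 e3 X Y.
Proof. vunf; ring. Qed.
Lemma det3_e3_self u : det3 e3 u u = 0.
Proof. vunf; ring. Qed.


Definition good (m n : nat) (F : net_of) (D : nat -> nat -> vec3) : Prop :=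
  (2 <= m)%nat /\ (2 <= n)%nat /\ is_net m n F /\
  (forall k l, (k < m)%nat -> (l < n)%nat ->
     Lp (F k l) (D k l) = 0 /\ Lp (F (S k) l) (D k l) = 0 /\
     Lp (F (S k) (S l)) (D k l) = 0 /\ Lp (F k (S l)) (D k l) = 0) /\
  (forall k l, (k < m)%nat -> (S l < n)%nat -> D k l <> D k (S l)) /\
  (forall k l, (S k < m)%nat -> (l < n)%nat -> D k l <> D (S k) l) /\
  (forall i j u al be, (S i < m)%nat -> (S j < n)%nat ->
     vsub (D i (S j)) (D i j) = vscale al u -> vsub (D (S i) (S j)) (D (S i) j) = vscale be u ->
     u <> vzero -> 0 < al * be) /\
  (forall i j u al be, (S i < m)%nat -> (S j < n)%nat ->
     vsub (D (S i) j) (D i j) = vscale al u -> vsub (D (S i) (S j)) (D i (S j)) = vscale be u ->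
     u <> vzero -> 0 < al * be).


Lemma good_corners m n F D k l : good m n F D -> (k < m)%nat -> (l < n)%nat ->
  let A := F k l in let B := F (S k) l in let C := F (S k) (S l) in let Dd := F k (S l) in
  k2 (vsub B A) (vsub Dd A) <> 0 /\ k2 (vsub A B) (vsub C B) <> 0 /\
  k2 (vsub B C) (vsub Dd C) <> 0 /\ k2 (vsub C Dd) (vsub A Dd) <> 0.
Proof.
  intros [_ [_ [Hnet [HL _]]]] Hk Hl. cbv zeta.
  destruct (HL k l Hk Hl) as [h1 [h2 [h3 h4]]].
  eapply corners; [apply Hnet; auto | exact h1 | exact h2 | exact h3 | exact h4].
Qed.

Lemma sub_ne_zero X Y : X <> Y -> vsub X Y <> vzero.
Proof. intros H E. apply H. apply vec_eq; apply (f_equal vx) in E as ex; apply (f_equal vy) in E as ey;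
  apply (f_equal vz) in E as ez; vunf; unfold vx, vy, vz in *; simpl in *; lra. Qed.

Lemma lin_Lp2 X P Q : Lp X P = 0 -> Lp X Q = 0 -> lin X (vsub P Q) = 0.
Proof. intros. rewrite lin_sub. unfold Lp in *. lra. Qed.

Lemma HOM m n F D k M e : good m n F D -> (S k < m)%nat -> M <> vzero ->
  (forall j, (j <= n)%nat -> dot M (F (S k) j) = e) ->
  (forall j, (j <= n)%nat -> exists u, u <> vzero /\ forall i, (i <= m)%nat -> lin (F i j) u = 0) ->
  exists r, 0 < r /\ forall l, (S l < n)%nat ->
    vsub (D (S k) (S l)) (D (S k) l) = vscale r (vsub (D k (S l)) (D k l)).
Proof.
  intros Hg Hk HM HMr Hcol.
  pose proof Hg as [Hm [Hn [Hnet [HL [Hadj1 [Hadj2 [Hpos1 Hpos2]]]]]]].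
  set (Rl := fun l => Rv M e (D k l)).
  set (w := fun l => vsub (D (S k) l) (D k l)).
  set (rho := fun l => dot (w l) (Rl l) / dot (Rl l) (Rl l)).
  assert (Ra : forall l, (l < n)%nat -> lin (F (S k) l) (Rl l) = 0 /\ lin (F (S k) (S l)) (Rl l) = 0).
  { intros l Hl. destruct (HL k l ltac:(lia) Hl) as [h1 [h2 [h3 h4]]].
    split; apply Rv_lin; auto; apply HMr; lia. }
  assert (Rnz : forall l, (l < n)%nat -> Rl l <> vzero).
  { intros l Hl E.
    assert (Hrow : forall j, (j <= n)%nat -> Lp (F (S k) j) (D k l) = 0).
    { intros j Hj. eapply Rv_zero; eauto. }
    destruct (Compare_dec.lt_dec (S l) n) as [Hl'|Hl'].
    - apply (Hadj1 k l); [lia|lia|].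
      destruct (good_corners m n F D k (S l) Hg ltac:(lia) Hl') as [_ [c2 _]]. cbv zeta in c2.
      destruct (HL k l ltac:(lia) Hl) as [h1 [h2 [h3 h4]]].
      destruct (HL k (S l) ltac:(lia) Hl') as [g1 [g2 [g3 g4]]].
      apply (dual_unique (F (S k) (S l)) (F k (S l)) (F (S k) (S (S l)))); auto.
    - destruct l as [|l0]; [lia|].
      apply (Hadj1 k l0); [lia|lia|].
      destruct (good_corners m n F D k l0 Hg ltac:(lia) ltac:(lia)) as [_ [_ [c3 _]]]. cbv zeta in c3.
      destruct (HL k l0 ltac:(lia) ltac:(lia)) as [h1 [h2 [h3 h4]]].
      destruct (HL k (S l0) ltac:(lia) Hl) as [g1 [g2 [g3 g4]]].
      apply (dual_unique (F (S k) (S l0)) (F (S k) l0) (F k (S l0))); auto.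
      apply Hrow; lia. }
  assert (wker : forall l, (l < n)%nat -> lin (F (S k) l) (w l) = 0 /\ lin (F (S k) (S l)) (w l) = 0).
  { intros l Hl. destruct (HL k l ltac:(lia) Hl) as [h1 [h2 [h3 h4]]].
    destruct (HL (S k) l Hk Hl) as [g1 [g2 [g3 g4]]].
    split; apply lin_Lp2; auto. }
  assert (wR : forall l, (l < n)%nat -> w l = vscale (rho l) (Rl l)).
  { intros l Hl. destruct (good_corners m n F D (S k) l Hg Hk Hl) as [c1 _]. cbv zeta in c1.
    destruct (wker l Hl), (Ra l Hl).
    apply (KL1 (F (S k) l) (F (S k) (S l)) _ _ (vsub (F (S (S k)) l) (F (S k) l))); auto.
    rewrite k2_swap. intro E; apply c1; lra. }
  assert (step : forall l, (S l < n)%nat -> rho (S l) = rho l /\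
     vsub (D (S k) (S l)) (D (S k) l) = vscale (1 + rho l * vz M) (vsub (D k (S l)) (D k l))).
  { intros l Hl. destruct (Hcol (S l) ltac:(lia)) as [u [Hu Hul]].
    destruct (HL k l ltac:(lia) ltac:(lia)) as [h1 [h2 [h3 h4]]].
    destruct (HL k (S l) ltac:(lia) Hl) as [g1 [g2 [g3 g4]]].
    destruct (HL (S k) l Hk ltac:(lia)) as [f1 [f2 [f3 f4]]].
    destruct (HL (S k) (S l) Hk Hl) as [q1 [q2 [q3 q4]]].
    destruct (good_corners m n F D k l Hg ltac:(lia) ltac:(lia)) as [_ [_ [cC cD]]]. cbv zeta in cC, cD.
    destruct (good_corners m n F D (S k) (S l) Hg Hk Hl) as [cA _]. cbv zeta in cA.
    set (dl := vsub (D k (S l)) (D k l)).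
    set (dl' := vsub (D (S k) (S l)) (D (S k) l)).
    assert (Ec : dl = vscale (dot dl u / dot u u) u).
    { apply (KL1 (F k (S l)) (F (S k) (S l)) _ _ (vsub (F k l) (F k (S l))));
      [exact cD | unfold dl; apply lin_Lp2; auto | unfold dl; apply lin_Lp2; auto | apply Hul; lia | apply Hul; lia | exact Hu]. }
    assert (Ec' : dl' = vscale (dot dl' u / dot u u) u).
    { apply (KL1 (F (S k) (S l)) (F (S (S k)) (S l)) _ _ (vsub (F (S k) (S (S l))) (F (S k) (S l))));
      [exact cA | unfold dl'; apply lin_Lp2; auto | unfold dl'; apply lin_Lp2; auto | apply Hul; lia | apply Hul; lia | exact Hu]. }
    set (c := dot dl u / dot u u) in *. set (c' := dot dl' u / dot u u) in *.
    assert (E1 : vsub dl' dl = vsub (w (S l)) (w l)) by (unfold dl, dl', w; apply vec_eq; vunf; ring).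
    assert (E2 : vsub (Rl (S l)) (Rl l) = vscale (vz M) dl) by (unfold Rl, dl; apply Rv_sub).
    rewrite (wR (S l) Hl), (wR l ltac:(lia)) in E1.
    set (R := Rl l) in *. set (R' := Rl (S l)) in *.
    assert (E3 : vscale (rho (S l) - rho l) R = vscale (c' - c - rho (S l) * vz M * c) u).
    { assert (ER : R' = vadd R (vscale (vz M) dl)).
      { pose proof (f_equal vx E2) as x2. pose proof (f_equal vy E2) as y2. pose proof (f_equal vz E2) as z2.
        apply vec_eq; vunf; unfold vx, vy, vz in *; simpl in *; lra. }
      clearbody R'. subst R'. rewrite Ec, Ec' in E1.
      pose proof (f_equal vx E1) as x1. pose proof (f_equal vy E1) as y1. pose proof (f_equal vz E1) as z1.
      apply vec_eq; vunf; unfold vx, vy, vz in *; simpl in *; lra. }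
    assert (Hdet : det3 e3 R u <> 0).
    { destruct (Ra l ltac:(lia)) as [r1 r2].
      apply (E4L (F (S k) (S l)) (F (S k) l) (F k (S l)));
        [exact cC | exact r2 | exact r1 | apply Hul; lia | apply Hul; lia | apply Rnz; lia | exact Hu]. }
    apply (f_equal (fun X => det3 e3 X u)) in E3. cbv beta in E3.
    rewrite det3_e3_scale_l, det3_e3_scale_l, det3_e3_self in E3.
    assert (Hr : rho (S l) = rho l).
    { rewrite Rmult_0_r in E3. apply Rmult_integral in E3. destruct E3 as [E3|E3]; [lra|]. contradiction. }
    split; auto.
    rewrite Hr in E1.
    assert (ER : R' = vadd R (vscale (vz M) dl)).
    { pose proof (f_equal vx E2) as x2. pose proof (f_equal vy E2) as y2. pose proof (f_equal vz E2) as z2.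
      apply vec_eq; vunf; unfold vx, vy, vz in *; simpl in *; lra. }
    clearbody R'. subst R'. clearbody dl dl'.
    pose proof (f_equal vx E1) as x1. pose proof (f_equal vy E1) as y1. pose proof (f_equal vz E1) as z1.
    apply vec_eq; vunf; unfold vx, vy, vz in *; simpl in *; lra. }
  assert (rconst : forall l, (l < n)%nat -> rho l = rho 0%nat).
  { induction l as [|l IH]; intros Hl; auto. destruct (step l Hl) as [h _]. rewrite h. apply IH; lia. }
  exists (1 + rho 0%nat * vz M). split.
  - destruct (step 0%nat ltac:(lia)) as [_ h].
    assert (Hnz : vsub (D k 1%nat) (D k 0%nat) <> vzero) by (apply sub_ne_zero; intro E; apply (Hadj1 k 0%nat); auto; lia).
    assert (H := Hpos1 k 0%nat (vsub (D k 1%nat) (D k 0%nat)) 1 (1 + rho 0%nat * vz M) Hk ltac:(lia)).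
    rewrite Rmult_1_l in H. apply H; auto. apply vec_eq; vunf; ring.
  - intros l Hl. destruct (step l Hl) as [_ h]. rewrite h, (rconst l); auto; lia.
Qed.

Lemma RnzA m n F D k M e : good m n F D -> (k < m)%nat -> M <> vzero ->
  (forall j, (j <= n)%nat -> dot M (F (S k) j) = e) ->
  forall l, (l < n)%nat -> Rv M e (D k l) <> vzero.
Proof.
  intros Hg Hk HM HMr l Hl E.
  pose proof Hg as [Hm [Hn [Hnet [HL [Hadj1 [Hadj2 [Hpos1 Hpos2]]]]]]].
  assert (Hrow : forall j, (j <= n)%nat -> Lp (F (S k) j) (D k l) = 0).
  { intros j Hj. eapply Rv_zero; eauto. }
  destruct (Compare_dec.lt_dec (S l) n) as [Hl'|Hl'].
  - apply (Hadj1 k l); [lia|lia|].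
    destruct (good_corners m n F D k (S l) Hg ltac:(lia) Hl') as [_ [c2 _]]. cbv zeta in c2.
    destruct (HL k l ltac:(lia) Hl) as [h1 [h2 [h3 h4]]].
    destruct (HL k (S l) ltac:(lia) Hl') as [g1 [g2 [g3 g4]]].
    apply (dual_unique (F (S k) (S l)) (F k (S l)) (F (S k) (S (S l)))); auto.
  - destruct l as [|l0]; [lia|].
    apply (Hadj1 k l0); [lia|lia|].
    destruct (good_corners m n F D k l0 Hg ltac:(lia) ltac:(lia)) as [_ [_ [c3 _]]]. cbv zeta in c3.
    destruct (HL k l0 ltac:(lia) ltac:(lia)) as [h1 [h2 [h3 h4]]].
    destruct (HL k (S l0) ltac:(lia) Hl) as [g1 [g2 [g3 g4]]].
    apply (dual_unique (F (S k) (S l0)) (F (S k) l0) (F k (S l0))); auto.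
    apply Hrow; lia.
Qed.

Lemma RnzB m n F D M e : good m n F D -> M <> vzero ->
  (forall j, (j <= n)%nat -> dot M (F 0%nat j) = e) ->
  forall l, (l < n)%nat -> Rv M e (D 0%nat l) <> vzero.
Proof.
  intros Hg HM HMr l Hl E.
  pose proof Hg as [Hm [Hn [Hnet [HL [Hadj1 [Hadj2 [Hpos1 Hpos2]]]]]]].
  assert (Hrow : forall j, (j <= n)%nat -> Lp (F 0%nat j) (D 0%nat l) = 0).
  { intros j Hj. eapply Rv_zero; eauto. }
  destruct (Compare_dec.lt_dec (S l) n) as [Hl'|Hl'].
  - apply (Hadj1 0%nat l); [lia|lia|].
    destruct (good_corners m n F D 0 (S l) Hg ltac:(lia) Hl') as [c1 _]. cbv zeta in c1.
    destruct (HL 0%nat l ltac:(lia) Hl) as [h1 [h2 [h3 h4]]].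
    destruct (HL 0%nat (S l) ltac:(lia) Hl') as [g1 [g2 [g3 g4]]].
    apply (dual_unique (F 0%nat (S l)) (F 1%nat (S l)) (F 0%nat (S (S l)))); auto.
    all: try (apply Hrow; lia).
  - destruct l as [|l0]; [lia|].
    apply (Hadj1 0%nat l0); [lia|lia|].
    destruct (good_corners m n F D 0 l0 Hg ltac:(lia) ltac:(lia)) as [_ [_ [_ c4]]]. cbv zeta in c4.
    destruct (HL 0%nat l0 ltac:(lia) ltac:(lia)) as [h1 [h2 [h3 h4]]].
    destruct (HL 0%nat (S l0) ltac:(lia) Hl) as [g1 [g2 [g3 g4]]].
    apply (dual_unique (F 0%nat (S l0)) (F 1%nat (S l0)) (F 0%nat l0)); auto.
    all: try (apply Hrow; lia).
Qed.

Definition delt (D : nat -> nat -> vec3) (k : nat) : vec3 := vsub (D k 1%nat) (D k 0%nat).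
Definition ratio (D : nat -> nat -> vec3) (k : nat) : R :=
  dot (delt D (S k)) (delt D k) / dot (delt D k) (delt D k).
Fixpoint rho (D : nat -> nat -> vec3) (k : nat) : R :=
  match k with 0 => 1 | S k' => rho D k' * ratio D k' end.

Lemma dot_pos X : X <> vzero -> 0 < dot X X.
Proof. intro H. destruct (vzero_dec X) as [E|E]; [contradiction|]. unfold dot; destruct E as [E|[E|E]]; nra. Qed.

Lemma scaling m n F D :
  good m n F D ->
  (forall i, (i <= m)%nat -> exists M e, M <> vzero /\ forall j, (j <= n)%nat -> dot M (F i j) = e) ->
  (forall j, (j <= n)%nat -> exists u, u <> vzero /\ forall i, (i <= m)%nat -> lin (F i j) u = 0) ->
  forall k, (k < m)%nat -> 0 < rho D k /\ forall l, (S l < n)%nat ->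
    vsub (D k (S l)) (D k l) = vscale (rho D k) (vsub (D 0%nat (S l)) (D 0%nat l)).
Proof.
  intros Hg Hrow Hcol. induction k as [|k IH]; intros Hk.
  - split; [simpl; lra|]. intros l Hl. simpl. apply vec_eq; vunf; ring.
  - destruct (IH ltac:(lia)) as [Hr IHl].
    destruct (Hrow (S k) ltac:(lia)) as [M [e [HM HMr]]].
    destruct (HOM m n F D k M e Hg Hk HM HMr Hcol) as [r [Hr0 Hh]].
    pose proof Hg as [Hm [Hn [Hnet [HL [Hadj1 _]]]]].
    assert (Hd : delt D (S k) = vscale r (delt D k)) by (unfold delt; apply Hh; lia).
    assert (Hnz : delt D k <> vzero) by (unfold delt; apply sub_ne_zero; intro E; apply (Hadj1 k 0%nat); auto; lia).
    assert (Hra : ratio D k = r).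
    { unfold ratio. rewrite Hd. pose proof (dot_pos _ Hnz).
      replace (dot (vscale r (delt D k)) (delt D k)) with (r * dot (delt D k) (delt D k)) by (vunf; ring).
      field. lra. }
    simpl. rewrite Hra. split; [nra|].
    intros l Hl. rewrite Hh by auto. rewrite IHl by auto. apply vec_eq; vunf; ring.
Qed.

Lemma telescope m n F D :
  good m n F D ->
  (forall i, (i <= m)%nat -> exists M e, M <> vzero /\ forall j, (j <= n)%nat -> dot M (F i j) = e) ->
  (forall j, (j <= n)%nat -> exists u, u <> vzero /\ forall i, (i <= m)%nat -> lin (F i j) u = 0) ->
  forall k l, (k < m)%nat -> (l < n)%nat ->
    D k l = vadd (D k 0%nat) (vscale (rho D k) (vsub (D 0%nat l) (D 0%nat 0%nat))).
Proof.
  intros Hg Hrow Hcol k l Hk. destruct (scaling m n F D Hg Hrow Hcol k Hk) as [_ Hs].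
  induction l as [|l IH]; intros Hl.
  - apply vec_eq; vunf; ring.
  - pose proof (Hs l Hl) as E. rewrite IH in E by lia.
    pose proof (f_equal vx E) as ex. pose proof (f_equal vy E) as ey. pose proof (f_equal vz E) as ez.
    apply vec_eq; vunf; unfold vx, vy, vz in *; simpl in *; lra.
Qed.

Definition sigC (m : nat) (D : nat -> nat -> vec3) (lam0 lam1 : R) (i : nat) : R :=
  match i with 0%nat => lam0 | S k => if Nat.leb m k then lam1 * rho D (m - 1) else rho D k end.
Definition bC (n : nat) (D : nat -> nat -> vec3) (u0 un : vec3) (l : nat) : vec3 :=
  match l with 0%nat => vsub (D 0%nat 0%nat) u0
  | S l' => if Nat.leb n l' then vadd (D 0%nat (n - 1)%nat) un else D 0%nat l' end.
Definition aC (m : nat) (D : nat -> nat -> vec3) (kap0 : R) (v0 : vec3) (lam1 kap1 : R) (v1 : vec3) (i : nat) : vec3 :=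
  match i with 0%nat => vscale kap0 v0
  | S k => if Nat.leb m k
           then vadd (vscale lam1 (vsub (D (m - 1)%nat 0%nat) (vscale (rho D (m - 1)) (D 0%nat 0%nat)))) (vscale kap1 v1)
           else vsub (D k 0%nat) (vscale (rho D k) (D 0%nat 0%nat)) end.

Lemma kap_lem z : 0 < / (2 * (1 + Rabs z)) /\ 0 < 1 + / (2 * (1 + Rabs z)) * z.
Proof.
  pose proof (Rabs_pos z). split.
  - apply Rinv_0_lt_compat. lra.
  - assert (H1 : / (2 * (1 + Rabs z)) * (2 * (1 + Rabs z)) = 1) by (field; lra).
    assert (H2 : - Rabs z <= z) by (pose proof (Rle_abs (- z)); rewrite Rabs_Ropp in H0; lra).
    assert (H3 : 0 < / (2 * (1 + Rabs z))) by (apply Rinv_0_lt_compat; lra).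
    nra.
Qed.

Lemma Lp_comb X P k M e : Lp X P = 0 -> dot M X = e -> Lp X (vadd P (vscale k (Rv M e P))) = 0.
Proof. intros h1 h2. pose proof (Rv_lin M e P X h2 h1). unfold Lp in *. rewrite lin_add, lin_scale. nra. Qed.

Lemma Lp_sub_sc X P s u : Lp X (vsub P (vscale s u)) = Lp X P - s * lin X u.
Proof. unfold Lp, lin; vunf; ring. Qed.

Lemma leb_f m k : (k < m)%nat -> Nat.leb m k = false.
Proof. intro; apply Nat.leb_gt; lia. Qed.
Lemma leb_t m k : (m <= k)%nat -> Nat.leb m k = true.
Proof. intro; apply Nat.leb_le; lia. Qed.

Lemma Delta_P a b sigma i j : Delta a b sigma i j =
  vsub (vadd (a (S i)) (vscale (sigma (S i)) (b j))) (vadd (a i) (vscale (sigma i) (b j))).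
Proof. unfold Delta; apply vec_eq; vunf; ring. Qed.

Lemma det3_e3_scale_r s X Y : det3 e3 X (vscale s Y) = s * det3 e3 X Y.
Proof. vunf; ring. Qed.
Lemma vsub_vadd_l P k X : vsub P (vadd P (vscale k X)) = vscale (- k) X.
Proof. apply vec_eq; vunf; ring. Qed.
Lemma vsub_vadd_r P k X : vsub (vadd P (vscale k X)) P = vscale k X.
Proof. apply vec_eq; vunf; ring. Qed.
Lemma det_Rv_shift u M e P s : det3 e3 u (Rv M e (vsub P (vscale s u))) = det3 e3 u (Rv M e P).
Proof. unfold Rv; vunf; ring. Qed.
Lemma det_shift2 u P Q s t : det3 e3 u (vsub (vsub P (vscale s u)) (vsub Q (vscale t u))) = det3 e3 u (vsub P Q).
Proof. vunf; ring. Qed.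

Lemma partC m n F D : good m n F D ->
  (forall i, (i <= m)%nat -> in_some_plane (line_i n F i)) ->
  (forall j, (j <= n)%nat -> in_some_isotropic_plane (line_j m F j)) ->
  exists (a b : nat -> vec3) (sigma : nat -> R),
    (forall k, (k <= S m)%nat -> 0 < sigma k) /\
    (forall i j, (i <= m)%nat -> (j <= n)%nat ->
       det3 e3 (vsub (b (S j)) (b j)) (Delta a b sigma i j) <> 0 /\
       F i j = T_point a b sigma i j (vadd (a i) (vscale (sigma i) (b j)))).
Proof.
  intros Hg Hrow0 Hcol0.
  assert (Hrow : forall i, (i <= m)%nat -> exists M e, M <> vzero /\ forall j, (j <= n)%nat -> dot M (F i j) = e)
    by (intros; apply row_plane; auto).
  assert (Hcol : forall j, (j <= n)%nat -> exists u, u <> vzero /\ forall i, (i <= m)%nat -> lin (F i j) u = 0)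
    by (intros; apply col_iso; auto).
  pose proof Hg as [Hm [Hn [Hnet [HL [Hadj1 [Hadj2 [Hpos1 Hpos2]]]]]]].
  destruct (Hrow 0%nat ltac:(lia)) as [M0 [e0 [HM0 HR0]]].
  destruct (Hrow m ltac:(lia)) as [M1 [e1 [HM1 HR1]]].
  destruct (Hcol 0%nat ltac:(lia)) as [u0 [Hu0 Hu0l]].
  destruct (Hcol n ltac:(lia)) as [un [Hun Hunl]].
  destruct (kap_lem (vz M0)) as [Hk0 Hl0]. destruct (kap_lem (vz M1)) as [Hk1 Hl1].
  set (kap0 := / (2 * (1 + Rabs (vz M0)))) in *. set (kap1 := / (2 * (1 + Rabs (vz M1)))) in *.
  set (lam0 := 1 + kap0 * vz M0) in *. set (lam1 := 1 + kap1 * vz M1) in *.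
  set (v0 := mk3 (vx M0) (vy M0) e0). set (v1 := mk3 (vx M1) (vy M1) e1).
  set (a := aC m D kap0 v0 lam1 kap1 v1). set (b := bC n D u0 un). set (sg := sigC m D lam0 lam1).
  exists a, b, sg.
  pose proof (scaling m n F D Hg Hrow Hcol) as Hsc.
  pose proof (telescope m n F D Hg Hrow Hcol) as Htel.
  set (Pc := fun i j => vadd (a i) (vscale (sg i) (b j))).
  assert (F1 : forall k l, (k < m)%nat -> (l < n)%nat -> Pc (S k) (S l) = D k l).
  { intros k l Hk Hl. unfold Pc, a, b, sg, aC, bC, sigC. rewrite !leb_f by auto.
    rewrite (Htel k l Hk Hl). apply vec_eq; vunf; ring. }
  assert (F2 : forall k, (k < m)%nat -> Pc (S k) 0%nat = vsub (D k 0%nat) (vscale (rho D k) u0)).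
  { intros k Hk. unfold Pc, a, b, sg, aC, bC, sigC. cbv beta iota. rewrite !leb_f by auto. apply vec_eq; vunf; ring. }
  assert (F3 : forall j, Pc 0%nat j = vadd (Pc 1%nat j) (vscale kap0 (Rv M0 e0 (Pc 1%nat j)))).
  { intros j. unfold Pc, a, b, sg, aC, bC, sigC, Rv, lam0, v0. cbv beta iota. rewrite !(leb_f m 0) by lia. simpl rho.
    apply vec_eq; vunf; ring. }
  assert (F4 : forall j, Pc (S m) j = vadd (Pc m j) (vscale kap1 (Rv M1 e1 (Pc m j)))).
  { intros j. destruct m as [|m']; [lia|]. unfold Pc, a, b, sg, aC, bC, sigC, Rv, lam1, v1. cbv beta iota.
    rewrite (leb_t (S m') (S m')) by lia. rewrite (leb_f (S m') m') by lia.
    replace (S m' - 1)%nat with m' by lia. apply vec_eq; vunf; ring. }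
  assert (Fs : forall k, (k <= S m)%nat -> 0 < sg k).
  { intros k Hk. unfold sg, sigC. destruct k as [|k]; auto.
    destruct (Nat.leb m k) eqn:E.
    - apply Nat.leb_le in E. destruct (Hsc (m - 1)%nat ltac:(lia)) as [h _]. nra.
    - apply Nat.leb_gt in E. apply Hsc; lia. }
  assert (W : forall k j, (k < m)%nat -> (j <= n)%nat ->
    Lp (F (S k) j) (Pc (S k) j) = 0 /\ Lp (F k j) (Pc (S k) j) = 0).
  { intros k j Hk Hj. destruct j as [|l].
    - rewrite F2 by auto. rewrite !Lp_sub_sc. destruct (HL k 0%nat Hk ltac:(lia)) as [h1 [h2 _]].
      rewrite h1, h2, Hu0l, Hu0l by lia. split; ring.
    - rewrite F1 by lia. destruct (HL k l Hk ltac:(lia)) as [_ [_ [h3 h4]]]. auto. }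
  assert (V12 : forall i j, (i <= m)%nat -> (j <= n)%nat ->
    Lp (F i j) (Pc i j) = 0 /\ Lp (F i j) (Pc (S i) j) = 0).
  { intros i j Hi Hj. destruct i as [|k].
    - destruct (W 0%nat j ltac:(lia) Hj) as [_ w2]. split; auto.
      rewrite F3. apply Lp_comb; auto.
    - destruct (W k j ltac:(lia) Hj) as [w1 _]. split; auto.
      destruct (Compare_dec.lt_dec (S k) m) as [Hk|Hk].
      + apply (W (S k) j Hk Hj).
      + replace (S k) with m in * by lia. rewrite F4. apply Lp_comb; auto. }
  assert (V3 : forall j, (j <= n)%nat -> exists u c, u <> vzero /\ c <> 0 /\
     (forall i, (i <= m)%nat -> lin (F i j) u = 0) /\ vsub (b (S j)) (b j) = vscale c u /\
     (j = 0%nat -> u = u0)).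
  { intros j Hj. destruct j as [|l].
    - exists u0, 1. split; [auto|split; [lra|split; [auto|split; [|auto]]]].
      unfold b, bC. cbv beta iota. rewrite leb_f by lia. apply vec_eq; vunf; ring.
    - destruct (Compare_dec.lt_dec (S l) n) as [Hl|Hl].
      + destruct (Hcol (S l) Hj) as [u [Hu Hul]].
        destruct (HL 0%nat l ltac:(lia) ltac:(lia)) as [h1 [h2 [h3 h4]]].
        destruct (HL 0%nat (S l) ltac:(lia) Hl) as [g1 [g2 [g3 g4]]].
        destruct (good_corners m n F D 0 l Hg ltac:(lia) ltac:(lia)) as [_ [_ [_ cD]]]. cbv zeta in cD.
        set (dd := vsub (D 0%nat (S l)) (D 0%nat l)).
        assert (Ec : dd = vscale (dot dd u / dot u u) u).
        { apply (KL1 (F 0%nat (S l)) (F 1%nat (S l)) _ _ (vsub (F 0%nat l) (F 0%nat (S l))));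
          [exact cD | unfold dd; apply lin_Lp2; auto | unfold dd; apply lin_Lp2; auto
          | apply Hul; lia | apply Hul; lia | exact Hu]. }
        exists u, (dot dd u / dot u u). split; [auto|split; [|split; [auto|split; [|intro; lia]]]].
        * intro E. rewrite E in Ec. apply (Hadj1 0%nat l); [lia|lia|].
          pose proof (f_equal vx Ec) as ex. pose proof (f_equal vy Ec) as ey. pose proof (f_equal vz Ec) as ez.
          unfold dd in *. apply vec_eq; vunf; unfold vx, vy, vz in *; simpl in *; lra.
        * unfold b, bC. cbv beta iota. rewrite !leb_f by lia. exact Ec.
      + assert (l = n - 1)%nat by lia. subst l.
        exists un, 1. split; [auto|split; [lra|split; [intros i Hi; replace (S (n - 1)) with n by lia; apply Hunl; auto|split; [|intro; lia]]]].
        unfold b, bC. cbv beta iota. rewrite (leb_t n (S (n - 1))) by lia. rewrite (leb_f n (n - 1)) by lia.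
        apply vec_eq; vunf; ring. }
  split; [exact Fs|].
  intros i j Hi Hj.
  destruct (V3 j Hj) as [u [c [Hu [Hc [Hul [Hdb Hj0]]]]]].
  destruct (V12 i j Hi Hj) as [v1' v2'].
  assert (HD : det3 e3 u (vsub (Pc (S i) j) (Pc i j)) <> 0).
  { destruct i as [|k].
    - rewrite (F3 j), vsub_vadd_l, det3_e3_scale_r.
      apply Rmult_integral_contrapositive_currified; [lra|].
      destruct j as [|l].
      + rewrite (Hj0 eq_refl) in *. rewrite F2 by lia. simpl rho. rewrite det_Rv_shift.
        destruct (HL 0%nat 0%nat ltac:(lia) ltac:(lia)) as [h1 [h2 [h3 h4]]].
        destruct (good_corners m n F D 0 0 Hg ltac:(lia) ltac:(lia)) as [cA _]. cbv zeta in cA.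
        apply (E4L (F 0%nat 0%nat) (F 1%nat 0%nat) (F 0%nat 1%nat));
          [exact cA | apply Hu0l; lia | apply Hu0l; lia | apply Rv_lin; auto; apply HR0; lia
          | apply Rv_lin; auto; apply HR0; lia | exact Hu0 | apply (RnzB m n F D); auto; lia].
      + rewrite F1 by lia.
        destruct (HL 0%nat l ltac:(lia) ltac:(lia)) as [h1 [h2 [h3 h4]]].
        destruct (good_corners m n F D 0 l Hg ltac:(lia) ltac:(lia)) as [_ [_ [_ cD]]]. cbv zeta in cD.
        apply (E4L (F 0%nat (S l)) (F 1%nat (S l)) (F 0%nat l));
          [exact cD | apply Hul; lia | apply Hul; lia | apply Rv_lin; auto; apply HR0; lia
          | apply Rv_lin; auto; apply HR0; lia | exact Hu | apply (RnzB m n F D); auto; lia].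
    - destruct (Compare_dec.lt_dec (S k) m) as [Hk|Hk].
      + destruct j as [|l].
        * rewrite (Hj0 eq_refl) in *. rewrite !F2 by lia. rewrite det_shift2.
          destruct (HL k 0%nat ltac:(lia) ltac:(lia)) as [h1 [h2 [h3 h4]]].
          destruct (HL (S k) 0%nat ltac:(lia) ltac:(lia)) as [g1 [g2 [g3 g4]]].
          destruct (good_corners m n F D (S k) 0 Hg ltac:(lia) ltac:(lia)) as [cA _]. cbv zeta in cA.
          apply (E4L (F (S k) 0%nat) (F (S (S k)) 0%nat) (F (S k) 1%nat));
            [exact cA | apply Hu0l; lia | apply Hu0l; lia | apply lin_Lp2; auto
            | apply lin_Lp2; auto | exact Hu0 | apply sub_ne_zero; intro E; apply (Hadj2 k 0%nat); auto; lia].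
        * rewrite !F1 by lia.
          destruct (HL k l ltac:(lia) ltac:(lia)) as [h1 [h2 [h3 h4]]].
          destruct (HL (S k) l ltac:(lia) ltac:(lia)) as [g1 [g2 [g3 g4]]].
          destruct (good_corners m n F D k l Hg ltac:(lia) ltac:(lia)) as [_ [_ [cC _]]]. cbv zeta in cC.
          apply (E4L (F (S k) (S l)) (F k (S l)) (F (S k) l));
            [rewrite k2_swap; intro E; apply cC; lra | apply Hul; lia | apply Hul; lia | apply lin_Lp2; auto
            | apply lin_Lp2; auto | exact Hu | apply sub_ne_zero; intro E; apply (Hadj2 k l); auto; lia].
      + assert (Em : m = S k) by lia. subst m.
        rewrite (F4 j), vsub_vadd_r, det3_e3_scale_r.
        apply Rmult_integral_contrapositive_currified; [lra|].
        destruct j as [|l].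
        * rewrite (Hj0 eq_refl) in *. rewrite F2 by lia. rewrite det_Rv_shift.
          destruct (HL k 0%nat ltac:(lia) ltac:(lia)) as [h1 [h2 [h3 h4]]].
          destruct (good_corners (S k) n F D k 0 Hg ltac:(lia) ltac:(lia)) as [_ [cB _]]. cbv zeta in cB.
          apply (E4L (F (S k) 0%nat) (F k 0%nat) (F (S k) 1%nat));
            [exact cB | apply Hu0l; lia | apply Hu0l; lia | apply Rv_lin; auto; apply HR1; lia
            | apply Rv_lin; auto; apply HR1; lia | exact Hu0 | apply (RnzA (S k) n F D k); auto; lia].
        * rewrite F1 by lia.
          destruct (HL k l ltac:(lia) ltac:(lia)) as [h1 [h2 [h3 h4]]].
          destruct (good_corners (S k) n F D k l Hg ltac:(lia) ltac:(lia)) as [_ [_ [cC _]]]. cbv zeta in cC.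
          apply (E4L (F (S k) (S l)) (F k (S l)) (F (S k) l));
            [rewrite k2_swap; intro E; apply cC; lra | apply Hul; lia | apply Hul; lia | apply Rv_lin; auto; apply HR1; lia
            | apply Rv_lin; auto; apply HR1; lia | exact Hu | apply (RnzA (S k) n F D k); auto; lia]. }
  assert (Hdet : det3 e3 (vsub (b (S j)) (b j)) (Delta a b sg i j) <> 0).
  { rewrite Hdb, Delta_P, det3_e3_scale_l. apply Rmult_integral_contrapositive_currified; [exact Hc | exact HD]. }
  split; [exact Hdet|].
  rewrite T_point_Tp. apply Tp_unique; [exact Hdet | exact v1' | | ].
  - rewrite Hdb, lin_scale, Hul by auto. ring.
  - rewrite Delta_P. apply lin_Lp2; [exact v2' | exact v1'].
Qed.


Lemma perp_cross u v w : dot u w = 0 -> dot v w = 0 -> cross (cross u v) w = vzero.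
Proof.
  intros h1 h2.
  assert (E : cross (cross u v) w = vsub (vscale (dot u w) v) (vscale (dot v w) u)) by (apply vec_eq; vunf; ring).
  rewrite E, h1, h2. apply vec_eq; vunf; ring.
Qed.

Lemma dot_comm u v : dot u v = dot v u. Proof. vunf; ring. Qed.

Lemma par_pos a b t : 0 < dot t t -> cross a t = vzero -> cross b t = vzero ->
  0 < dot a t -> 0 < dot b t -> 0 < dot a b.
Proof.
  intros Ht ha hb pa pb.
  assert (L : dot t t * dot a b = dot a t * dot b t + dot (cross a t) (cross b t)) by (vunf; ring).
  rewrite ha, hb in L. replace (dot vzero vzero) with 0 in L by (vunf; ring).
  assert (0 < dot t t * dot a b) by (rewrite L; nra). nra.
Qed.

Lemma convex_par A B C D : convex_quad A B C D ->
  let t1 := cross (vsub B A) (vsub C B) in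
  cross (cross (vsub C B) (vsub D C)) t1 = vzero /\ cross (cross (vsub D C) (vsub A D)) t1 = vzero /\
  cross (cross (vsub A D) (vsub B A)) t1 = vzero /\ cross t1 t1 = vzero.
Proof.
  intros [Hd _] t1.
  assert (pAB : dot (vsub B A) t1 = 0) by (unfold t1; vunf; ring).
  assert (pBC : dot (vsub C B) t1 = 0) by (unfold t1; vunf; ring).
  assert (pCD : dot (vsub D C) t1 = 0).
  { unfold t1. replace (dot (vsub D C) (cross (vsub B A) (vsub C B))) with (det3 (vsub B A) (vsub C A) (vsub D A)) by (vunf; ring). exact Hd. }
  assert (pDA : dot (vsub A D) t1 = 0).
  { unfold t1. replace (dot (vsub A D) (cross (vsub B A) (vsub C B))) with (- det3 (vsub B A) (vsub C A) (vsub D A)) by (vunf; ring). rewrite Hd; ring. }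
  repeat split; apply perp_cross; auto.
Qed.

Lemma convex_pairs A B C D : convex_quad A B C D ->
  let t1 := cross (vsub B A) (vsub C B) in let t2 := cross (vsub C B) (vsub D C) in
  let t3 := cross (vsub D C) (vsub A D) in let t4 := cross (vsub A D) (vsub B A) in
  0 < dot t2 t2 /\ 0 < dot t2 t3 /\ 0 < dot t2 t4 /\ 0 < dot t3 t3 /\ 0 < dot t3 t4 /\ 0 < dot t4 t4 /\
  0 < dot t2 t1 /\ 0 < dot t3 t1 /\ 0 < dot t4 t1 /\ 0 < dot t3 t2 /\ 0 < dot t4 t2 /\ 0 < dot t4 t3.
Proof.
  intros Hc t1 t2 t3 t4. pose proof (convex_par A B C D Hc) as [c2 [c3 [c4 c1]]]. cbv zeta in *.
  destruct Hc as [_ [H1 [H2 [H3 H4]]]]. cbv zeta in *.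
  fold t1 t2 t3 t4 in c2, c3, c4, H1, H2, H3, H4.
  rewrite (dot_comm t1) in H2, H3, H4.
  repeat split; apply (par_pos _ _ t1); auto.
Qed.

Lemma convex_rot A B C D : convex_quad A B C D -> convex_quad B C D A.
Proof.
  intros Hc. pose proof (convex_pairs A B C D Hc) as P. cbv zeta in P.
  destruct Hc as [Hd _].
  split.
  - replace (det3 (vsub C B) (vsub D B) (vsub A B)) with (- det3 (vsub B A) (vsub C A) (vsub D A)) by (vunf; ring).
    rewrite Hd; ring.
  - cbv zeta. tauto.
Qed.

Lemma convex_rev A B C D : convex_quad A B C D -> convex_quad A D C B.
Proof.
  intros Hc. pose proof (convex_pairs A B C D Hc) as P. cbv zeta in P.
  destruct Hc as [Hd [H1 _]]. cbv zeta in H1.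
  split.
  - replace (det3 (vsub D A) (vsub C A) (vsub B A)) with (- det3 (vsub B A) (vsub C A) (vsub D A)) by (vunf; ring).
    rewrite Hd; ring.
  - cbv zeta.
    replace (cross (vsub D A) (vsub C D)) with (vscale (-1) (cross (vsub D C) (vsub A D))) by (apply vec_eq; vunf; ring).
    replace (cross (vsub C D) (vsub B C)) with (vscale (-1) (cross (vsub C B) (vsub D C))) by (apply vec_eq; vunf; ring).
    replace (cross (vsub B C) (vsub A B)) with (vscale (-1) (cross (vsub B A) (vsub C B))) by (apply vec_eq; vunf; ring).
    replace (cross (vsub A B) (vsub D A)) with (vscale (-1) (cross (vsub A D) (vsub B A))) by (apply vec_eq; vunf; ring).
    assert (SC : forall x y, dot (vscale (-1) x) (vscale (-1) y) = dot x y) by (intros; vunf; ring).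
    rewrite !SC.
    tauto.
Qed.

Definition offp (O Q1 Q2 Q3 Q4 : vec3) : Prop := forall N, N <> vzero ->
  dot N (vsub Q1 O) = 0 -> dot N (vsub Q2 O) = 0 -> dot N (vsub Q3 O) = 0 -> dot N (vsub Q4 O) = 0 -> False.

Lemma offp_of_det O Q1 Q2 Q3 Q4 : det3 (vsub Q2 Q1) (vsub Q4 Q1) (vsub O Q1) <> 0 -> offp O Q1 Q2 Q3 Q4.
Proof.
  intros Hd N HN h1 h2 h3 h4. apply HN.
  set (x := vsub Q2 Q1). set (y := vsub Q4 Q1). set (z := vsub O Q1).
  assert (nx : dot N x = 0) by (unfold x; replace (dot N (vsub Q2 Q1)) with (dot N (vsub Q2 O) - dot N (vsub Q1 O)) by (vunf; ring); lra).
  assert (ny : dot N y = 0) by (unfold y; replace (dot N (vsub Q4 Q1)) with (dot N (vsub Q4 O) - dot N (vsub Q1 O)) by (vunf; ring); lra).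
  assert (nz : dot N z = 0) by (unfold z; replace (dot N (vsub O Q1)) with (- dot N (vsub Q1 O)) by (vunf; ring); lra).
  assert (I : vscale (det3 x y z) N = vadd (vadd (vscale (dot N x) (cross y z)) (vscale (dot N y) (cross z x))) (vscale (dot N z) (cross x y)))
    by (apply vec_eq; vunf; ring).
  rewrite nx, ny, nz in I.
  apply vec_eq; pose proof (f_equal vx I) as ix; pose proof (f_equal vy I) as iy; pose proof (f_equal vz I) as iz;
  vunf; unfold vx, vy, vz in *; simpl in *.
  - apply (Rmult_eq_reg_l (det3 x y z)); auto. vunf. lra.
  - apply (Rmult_eq_reg_l (det3 x y z)); auto. vunf. lra.
  - apply (Rmult_eq_reg_l (det3 x y z)); auto. vunf. lra.
Qed.

Lemma FSL O A B C Dq n wa wb wc wd hh :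
  convex_quad A B C Dq -> offp O A B C Dq -> n <> vzero ->
  dot n (vsub A O) = 0 -> dot n (vsub B O) = 0 ->
  0 < wa -> 0 < wb -> 0 < wc -> 0 < wd -> wa + wb + wc + wd = 1 ->
  wa * vx A + wb * vx B + wc * vx C + wd * vx Dq - vx O = 0 ->
  wa * vy A + wb * vy B + wc * vy C + wd * vy Dq - vy O = 0 ->
  wa * vz A + wb * vz B + wc * vz C + wd * vz Dq - vz O = hh ->
  vz n <> 0 /\ 0 < dot n (vsub C O) * vz n * hh /\ 0 < dot n (vsub Dq O) * vz n * hh.
Proof.
  intros Hc Hoff Hn hA hB Ha Hb Hc' Hd Hw ex ey ez.
  pose proof Hc as [Hdet [H1 [_ [_ H4]]]]. cbv zeta in H1, H4.
  set (t1 := cross (vsub B A) (vsub C B)) in *. set (t4 := cross (vsub A Dq) (vsub B A)) in *.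
  set (sC := dot n (vsub C O)). set (sD := dot n (vsub Dq O)).
  assert (I : dot t1 t1 * dot n (vsub Dq A) =
     det3 (vsub B A) (vsub C A) (vsub Dq A) * dot n t1 + dot n (vsub C A) * dot t1 t4
     - dot n (vsub B A) * dot (vsub C A) (cross (vsub Dq A) t1)) by (unfold t1, t4; vunf; ring).
  replace (dot n (vsub Dq A)) with (sD - dot n (vsub A O)) in I by (unfold sD; vunf; ring).
  replace (dot n (vsub C A)) with (sC - dot n (vsub A O)) in I by (unfold sC; vunf; ring).
  replace (dot n (vsub B A)) with (dot n (vsub B O) - dot n (vsub A O)) in I by (vunf; ring).
  rewrite hA, hB, Hdet in I.
  assert (Iw : wa * dot n (vsub A O) + wb * dot n (vsub B O) + wc * sC + wd * sD =
     vx n * (wa * vx A + wb * vx B + wc * vx C + wd * vx Dq - vx O) +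
     vy n * (wa * vy A + wb * vy B + wc * vy C + wd * vy Dq - vy O) +
     vz n * (wa * vz A + wb * vz B + wc * vz C + wd * vz Dq - vz O) + (1 - (wa + wb + wc + wd)) * dot n O)
    by (unfold sC, sD; vunf; ring).
  rewrite hA, hB, ex, ey, ez, Hw in Iw.
  assert (Iw' : wc * sC + wd * sD = vz n * hh) by lra. clear Iw.
  assert (I' : dot t1 t1 * sD = sC * dot t1 t4) by lra. clear I.
  assert (HsC : sC <> 0).
  { intro E. rewrite E in I'. assert (sD = 0) by nra.
    apply (Hoff n Hn); auto. }
  assert (Hz : vz n * hh <> 0).
  { intro E. rewrite E in Iw'.
    assert (sC * (wc * dot t1 t1 + wd * dot t1 t4) = 0) by nra.
    apply Rmult_integral in H. destruct H; [contradiction|nra]. }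
  split; [intro E; apply Hz; rewrite E; ring|].
  set (K := wc * dot t1 t1 + wd * dot t1 t4).
  assert (HK : 0 < K) by (unfold K; nra).
  assert (E : vz n * hh * dot t1 t1 = sC * K).
  { rewrite <- Iw'. unfold K. transitivity (wc * sC * dot t1 t1 + wd * (dot t1 t1 * sD)); [ring|]. rewrite I'. ring. }
  split.
  - apply (pos_factor _ (dot t1 t1)); auto.
    replace (sC * vz n * hh * dot t1 t1) with (sC * (vz n * hh * dot t1 t1)) by ring. rewrite E.
    replace (sC * (sC * K)) with ((sC * sC) * K) by ring. apply Rmult_lt_0_compat; [nra|auto].
  - apply (pos_factor _ (dot t1 t1 * dot t1 t1)); [nra|].
    replace (sD * vz n * hh * (dot t1 t1 * dot t1 t1)) with ((dot t1 t1 * sD) * (vz n * hh * dot t1 t1)) by ring.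
    rewrite E, I'. replace (sC * dot t1 t4 * (sC * K)) with ((sC * sC) * (dot t1 t4 * K)) by ring.
    apply Rmult_lt_0_compat; [nra|]. apply Rmult_lt_0_compat; auto.
Qed.

Definition fnorm (F : net_of) (k l : nat) : vec3 :=
  cross (vsub (F (S k) l) (F k l)) (vsub (F k (S l)) (F k l)).
Definition Dual (F : net_of) (k l : nat) : vec3 :=
  let N := fnorm F k l in let P := F k l in
  mk3 (- vx N / vz N) (- vy N / vz N) ((- vx N / vz N) * vx P + (- vy N / vz N) * vy P - vz P).

Lemma Lp_Dual F k l X : vz (fnorm F k l) <> 0 ->
  Lp X (Dual F k l) = - dot (fnorm F k l) (vsub X (F k l)) / vz (fnorm F k l).
Proof. intros H. unfold Dual, Lp, lin. cbv zeta. set (N := fnorm F k l) in *. vunf. field. exact H. Qed.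

Lemma in_face_dot F k l X : in_face_plane F k l X -> dot (fnorm F k l) (vsub X (F k l)) = 0.
Proof. unfold in_face_plane, fnorm. intro H. rewrite <- H. vunf. ring. Qed.

Lemma face_facts F k l : convex_quad (F k l) (F (S k) l) (F (S k) (S l)) (F k (S l)) ->
  fnorm F k l <> vzero /\ dot (fnorm F k l) (vsub (F k l) (F k l)) = 0 /\
  dot (fnorm F k l) (vsub (F (S k) l) (F k l)) = 0 /\ dot (fnorm F k l) (vsub (F (S k) (S l)) (F k l)) = 0 /\
  dot (fnorm F k l) (vsub (F k (S l)) (F k l)) = 0.
Proof.
  intros Hc. pose proof Hc as [Hd [H1 [_ [_ H4]]]]. cbv zeta in H1, H4.
  split; [|split; [|split; [|split]]].
  - intro E. assert (Et : cross (vsub (F k l) (F k (S l))) (vsub (F (S k) l) (F k l)) = fnorm F k l)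
      by (unfold fnorm; apply vec_eq; vunf; ring).
    rewrite Et, E in H4. vunf. lra.
  - unfold fnorm; vunf; ring.
  - unfold fnorm; vunf; ring.
  - unfold fnorm. replace (dot (cross (vsub (F (S k) l) (F k l)) (vsub (F k (S l)) (F k l))) (vsub (F (S k) (S l)) (F k l)))
      with (- det3 (vsub (F (S k) l) (F k l)) (vsub (F (S k) (S l)) (F k l)) (vsub (F k (S l)) (F k l))) by (vunf; ring).
    rewrite Hd; ring.
  - unfold fnorm; vunf; ring.
Qed.

Lemma E_zero F k l X : vz (fnorm F k l) <> 0 -> dot (fnorm F k l) (vsub X (F k l)) = 0 -> Lp X (Dual F k l) = 0.
Proof. intros H1 H2. rewrite Lp_Dual by auto. rewrite H2. field. auto. Qed.

Lemma E_sign F k l X O hh : vz (fnorm F k l) <> 0 -> dot (fnorm F k l) (vsub O (F k l)) = 0 ->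
  0 < dot (fnorm F k l) (vsub X O) * vz (fnorm F k l) * hh -> Lp X (Dual F k l) * hh < 0.
Proof.
  intros H1 H2 H3. rewrite Lp_Dual by auto.
  replace (dot (fnorm F k l) (vsub X (F k l))) with (dot (fnorm F k l) (vsub X O) + dot (fnorm F k l) (vsub O (F k l))) by (vunf; ring).
  rewrite H2. set (s := dot (fnorm F k l) (vsub X O)) in *. set (z := vz (fnorm F k l)) in *.
  replace (- (s + 0) / z * hh) with (- (s * z * hh) / (z * z)) by (field; auto).
  assert (0 < z * z) by (destruct (Rlt_or_le 0 z); nra).
  unfold Rdiv. rewrite Ropp_mult_distr_l_reverse. apply Ropp_lt_gt_0_contravar.
  apply Rmult_lt_0_compat; auto. apply Rinv_0_lt_compat; auto.
Qed.

Lemma offp_rot O Q1 Q2 Q3 Q4 : offp O Q1 Q2 Q3 Q4 -> offp O Q2 Q3 Q4 Q1.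
Proof. intros H N HN h2 h3 h4 h1. exact (H N HN h1 h2 h3 h4). Qed.

Lemma dsub_O n X O P : dot n (vsub X P) = 0 -> dot n (vsub O P) = 0 -> dot n (vsub X O) = 0.
Proof. intros h1 h2. replace (dot n (vsub X O)) with (dot n (vsub X P) - dot n (vsub O P)) by (vunf; ring). lra. Qed.

Lemma VL m n F i j : dual_convex m n F -> (S i < m)%nat -> (S j < n)%nat ->
  let D1 := Dual F i j in let D2 := Dual F (S i) j in
  let D3 := Dual F (S i) (S j) in let D4 := Dual F i (S j) in
  vz (fnorm F i j) <> 0 /\ vz (fnorm F (S i) j) <> 0 /\ vz (fnorm F (S i) (S j)) <> 0 /\ vz (fnorm F i (S j)) <> 0 /\
  exists Q1 Q2 Q3 Q4 hh,
    (Lp Q1 D1 = 0 /\ Lp Q2 D1 = 0 /\ Lp Q2 D2 = 0 /\ Lp Q3 D2 = 0 /\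
     Lp Q3 D3 = 0 /\ Lp Q4 D3 = 0 /\ Lp Q4 D4 = 0 /\ Lp Q1 D4 = 0) /\
    (Lp Q3 D1 * hh < 0 /\ Lp Q4 D1 * hh < 0 /\ Lp Q4 D2 * hh < 0 /\ Lp Q1 D2 * hh < 0 /\
     Lp Q1 D3 * hh < 0 /\ Lp Q2 D3 * hh < 0 /\ Lp Q2 D4 * hh < 0 /\ Lp Q3 D4 * hh < 0).
Proof.
  intros [Hnet [Hm [Hn Hdc]]] Hi Hj D1 D2 D3 D4.
  pose proof (Hdc (S i) (S j) ltac:(lia) Hi ltac:(lia) Hj) as Hv.
  unfold dual_convex_at in Hv. cbv zeta in Hv.
  replace (S i - 1)%nat with i in Hv by lia. replace (S j - 1)%nat with j in Hv by lia.
  destruct Hv as [Q1 [Q2 [Q3 [Q4 [[Hcq Hdet] [Hadm [p1 [p2 [p3 [p4 [p5 [p6 [p7 p8]]]]]]]]]]]]].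
  apply in_face_dot in p1, p2, p3, p4, p5, p6, p7, p8.
  set (O := F (S i) (S j)) in *.
  destruct (face_facts F i j (Hnet i j ltac:(lia) ltac:(lia))) as [n1z [_ [_ [o1 _]]]].
  destruct (face_facts F (S i) j (Hnet (S i) j ltac:(lia) ltac:(lia))) as [n2z [_ [_ [_ o2]]]].
  destruct (face_facts F (S i) (S j) (Hnet (S i) (S j) ltac:(lia) ltac:(lia))) as [n3z [o3 _]].
  destruct (face_facts F i (S j) (Hnet i (S j) ltac:(lia) ltac:(lia))) as [n4z [_ [o4 _]]].
  fold O in o1, o2, o3, o4.
  destruct Hadm as [s [lam [w1 [w2 [w3 [w4 [Hlam [Hw1 [Hw2 [Hw3 [Hw4 [Hws Hvv]]]]]]]]]]]].
  pose proof (f_equal vx Hvv) as vxx. pose proof (f_equal vy Hvv) as vyy. pose proof (f_equal vz Hvv) as vzz.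
  unfold vadd, vsub, vscale, e3, mk3, vx, vy, vz in vxx, vyy, vzz; simpl in vxx, vyy, vzz.
  set (hh := s / lam).
  assert (ex : w1 * vx Q1 + w2 * vx Q2 + w3 * vx Q3 + w4 * vx Q4 - vx O = 0).
  { apply (Rmult_eq_reg_l lam); [|lra]. transitivity (s * 0); [unfold vx; rewrite vxx; ring| ring]. }
  assert (ey : w1 * vy Q1 + w2 * vy Q2 + w3 * vy Q3 + w4 * vy Q4 - vy O = 0).
  { apply (Rmult_eq_reg_l lam); [|lra]. transitivity (s * 0); [unfold vy; rewrite vyy; ring| ring]. }
  assert (ez : w1 * vz Q1 + w2 * vz Q2 + w3 * vz Q3 + w4 * vz Q4 - vz O = hh).
  { unfold hh. apply (Rmult_eq_reg_l lam); [|lra]. transitivity (s * 1); [unfold vz; rewrite vzz; ring| field; lra]. }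
  clear vxx vyy vzz Hvv.
  pose proof (offp_of_det O Q1 Q2 Q3 Q4 Hdet) as off1.
  pose proof (offp_rot _ _ _ _ _ off1) as off2. pose proof (offp_rot _ _ _ _ _ off2) as off3.
  pose proof (offp_rot _ _ _ _ _ off3) as off4.
  pose proof (convex_rot _ _ _ _ Hcq) as cq2. pose proof (convex_rot _ _ _ _ cq2) as cq3.
  pose proof (convex_rot _ _ _ _ cq3) as cq4.
  destruct (FSL O Q1 Q2 Q3 Q4 (fnorm F i j) w1 w2 w3 w4 hh Hcq off1 n1z
     (dsub_O _ _ _ _ p1 o1) (dsub_O _ _ _ _ p2 o1) Hw1 Hw2 Hw3 Hw4 ltac:(lra) ex ey ez) as [z1 [s13 s14]].
  destruct (FSL O Q2 Q3 Q4 Q1 (fnorm F (S i) j) w2 w3 w4 w1 hh cq2 off2 n2z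
     (dsub_O _ _ _ _ p3 o2) (dsub_O _ _ _ _ p4 o2) Hw2 Hw3 Hw4 Hw1 ltac:(lra) ltac:(lra) ltac:(lra) ltac:(lra)) as [z2 [s24 s21]].
  destruct (FSL O Q3 Q4 Q1 Q2 (fnorm F (S i) (S j)) w3 w4 w1 w2 hh cq3 off3 n3z
     (dsub_O _ _ _ _ p5 o3) (dsub_O _ _ _ _ p6 o3) Hw3 Hw4 Hw1 Hw2 ltac:(lra) ltac:(lra) ltac:(lra) ltac:(lra)) as [z3 [s31 s32]].
  destruct (FSL O Q4 Q1 Q2 Q3 (fnorm F i (S j)) w4 w1 w2 w3 hh cq4 off4 n4z
     (dsub_O _ _ _ _ p7 o4) (dsub_O _ _ _ _ p8 o4) Hw4 Hw1 Hw2 Hw3 ltac:(lra) ltac:(lra) ltac:(lra) ltac:(lra)) as [z4 [s42 s43]].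
  split; [auto|split; [auto|split; [auto|split; [auto|]]]].
  exists Q1, Q2, Q3, Q4, hh. split.
  - unfold D1, D2, D3, D4. repeat split; apply E_zero; auto.
  - unfold D1, D2, D3, D4. repeat split; eapply E_sign; eauto.
Qed.

Lemma pos_from_signs al be L hh x y : x = al * L -> y = be * L -> x * hh < 0 -> y * hh < 0 -> 0 < al * be.
Proof.
  intros -> -> h1 h2.
  assert (0 < (al * L * hh) * (be * L * hh)) by nra.
  destruct (Rlt_or_le 0 (al * be)) as [|H']; auto.
  assert ((al * L * hh) * (be * L * hh) = (al * be) * ((L * hh) * (L * hh))) by ring.
  assert (0 <= (L * hh) * (L * hh)) by nra. nra.
Qed.

Lemma good_of_dc m n F : dual_convex m n F -> good m n F (Dual F).
Proof.
  intros Hdc. pose proof Hdc as [Hnet [Hm [Hn _]]].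
  assert (NZ : forall k l, (k < m)%nat -> (l < n)%nat -> vz (fnorm F k l) <> 0).
  { intros k l Hk Hl.
    destruct (Compare_dec.lt_dec (S k) m) as [Hk'|Hk']; destruct (Compare_dec.lt_dec (S l) n) as [Hl'|Hl'].
    - destruct (VL m n F k l Hdc Hk' Hl') as [z _]. exact z.
    - destruct l as [|l0]; [lia|]. destruct (VL m n F k l0 Hdc Hk' ltac:(lia)) as [_ [_ [_ [z _]]]]. exact z.
    - destruct k as [|k0]; [lia|]. destruct (VL m n F k0 l Hdc ltac:(lia) Hl') as [_ [z _]]. exact z.
    - destruct k as [|k0]; [lia|]. destruct l as [|l0]; [lia|].
      destruct (VL m n F k0 l0 Hdc ltac:(lia) ltac:(lia)) as [_ [_ [z _]]]. exact z. }
  split; [lia|split; [lia|split; [exact Hnet|split; [|split; [|split; [|split]]]]]].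
  - intros k l Hk Hl. destruct (face_facts F k l (Hnet k l Hk Hl)) as [_ [f1 [f2 [f3 f4]]]].
    repeat split; apply E_zero; auto.
  - intros k l Hk Hl E. destruct k as [|k0].
    + destruct (VL m n F 0 l Hdc ltac:(lia) Hl) as [_ [_ [_ [_ [Q1 [Q2 [Q3 [Q4 [hh [Z S]]]]]]]]]].
      cbv zeta in Z, S. destruct Z as [_ [z2 _]]. destruct S as [_ [_ [_ [_ [_ [_ [s _]]]]]]].
      rewrite <- E, z2 in s. lra.
    + destruct (VL m n F k0 l Hdc ltac:(lia) Hl) as [_ [_ [_ [_ [Q1 [Q2 [Q3 [Q4 [hh [Z S]]]]]]]]]].
      cbv zeta in Z, S. destruct Z as [_ [_ [_ [_ [_ [z6 _]]]]]]. destruct S as [_ [_ [s _]]].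
      rewrite E, z6 in s. lra.
  - intros k l Hk Hl E. destruct l as [|l0].
    + destruct (VL m n F k 0 Hdc Hk ltac:(lia)) as [_ [_ [_ [_ [Q1 [Q2 [Q3 [Q4 [hh [Z S]]]]]]]]]].
      cbv zeta in Z, S. destruct Z as [_ [_ [_ [z4 _]]]]. destruct S as [s _].
      rewrite E, z4 in s. lra.
    + destruct (VL m n F k l0 Hdc Hk ltac:(lia)) as [_ [_ [_ [_ [Q1 [Q2 [Q3 [Q4 [hh [Z S]]]]]]]]]].
      cbv zeta in Z, S. destruct Z as [_ [_ [_ [_ [_ [_ [_ z8]]]]]]]. destruct S as [_ [_ [_ [_ [s _]]]]].
      rewrite <- E, z8 in s. lra.
  - intros i j u al be Hi Hj E1 E2 Hu.
    destruct (VL m n F i j Hdc Hi Hj) as [_ [_ [_ [_ [Q1 [Q2 [Q3 [Q4 [hh [Z S]]]]]]]]]].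
    cbv zeta in Z, S. destruct Z as [_ [z2 [z3 _]]]. destruct S as [_ [_ [_ [_ [_ [s3 [s4 _]]]]]]].
    apply (pos_from_signs al be (lin Q2 u) hh (Lp Q2 (Dual F i (S j))) (Lp Q2 (Dual F (S i) (S j)))); auto.
    + rewrite (Lp_shift _ (Dual F i j)), E1, z2, lin_scale. ring.
    + rewrite (Lp_shift _ (Dual F (S i) j)), E2, z3, lin_scale. ring.
  - intros i j u al be Hi Hj E1 E2 Hu.
    destruct (VL m n F i j Hdc Hi Hj) as [_ [_ [_ [_ [Q1 [Q2 [Q3 [Q4 [hh [Z S]]]]]]]]]].
    cbv zeta in Z, S. destruct Z as [z1 [_ [_ [_ [_ [_ [_ z8]]]]]]]. destruct S as [_ [_ [_ [s1 [s2 _]]]]].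
    apply (pos_from_signs al be (lin Q1 u) hh (Lp Q1 (Dual F (S i) j)) (Lp Q1 (Dual F (S i) (S j)))); auto.
    + rewrite (Lp_shift _ (Dual F i j)), E1, z1, lin_scale. ring.
    + rewrite (Lp_shift _ (Dual F i (S j))), E2, z8, lin_scale. ring.
Qed.


Lemma good_transpose m n F D : good m n F D -> good n m (transpose_net F) (fun k l => D l k).
Proof.
  intros [Hm [Hn [Hnet [HL [Ha1 [Ha2 [Hp1 Hp2]]]]]]].
  split; [lia|split; [lia|split; [|split; [|split; [|split; [|split]]]]]].
  - intros k l Hk Hl. unfold transpose_net. apply convex_rev. apply Hnet; auto.
  - intros k l Hk Hl. unfold transpose_net. destruct (HL l k Hl Hk) as [h1 [h2 [h3 h4]]]. auto.
  - intros k l Hk Hl. apply (Ha2 l k); auto.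
  - intros k l Hk Hl. apply (Ha1 l k); auto.
  - intros i j u al be Hi Hj E1 E2 Hu. apply (Hp2 j i u al be); auto.
  - intros i j u al be Hi Hj E1 E2 Hu. apply (Hp1 j i u al be); auto.
Qed.

Lemma main_orient m n F D : good m n F D ->
  (forall i, (i <= m)%nat -> in_some_plane (line_i n F i)) ->
  (forall j, (j <= n)%nat -> in_some_isotropic_plane (line_j m F j)) ->
  T_representation m n F.
Proof.
  intros Hg Hr Hc. destruct (partC m n F D Hg Hr Hc) as [a [b [sg [Hpos Hrep]]]].
  exists a, b, sg. split; [exact Hpos|]. split; [exact Hrep|].
  pose proof Hg as [Hm [Hn [Hnet _]]].
  apply partD; auto. lia.
Qed.

Theorem proposition4 (m n : nat) (F : net_of) :
  generalized_T_net m n F ->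
  T_representation m n F \/ T_representation n m (transpose_net F).
Proof.
  intros [Hdc [Hrows [Hcols Hiso]]].
  pose proof (good_of_dc m n F Hdc) as Hg.
  destruct Hiso as [Hi | Hj].
  - right. apply (main_orient n m (transpose_net F) (fun k l => Dual F l k)).
    + apply good_transpose; exact Hg.
    + intros i Hi'. exact (Hcols i Hi').
    + intros j Hj'. exact (Hi j Hj').
  - left. apply (main_orient m n F (Dual F)); auto.
Qed.
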